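(* Let $X\subset\mathbb{R}^2$ be a twice continuously differentiable simple closed planar curve, regarded as the mm-space $\mathcal{X}$, and let $\mathbb{S}^1$ be the unit circle regarded likewise. If $H_{\mathcal{X}}(r)=H_{\mathbb{S}^1}(r)$ for all $r\geq0$, then $X$ is isometric to $\mathbb{S}^1$, i.e. $X$ is a circle of radius $1$.
   Context: A plane curve $X$ is regarded as an mm-space $\mathcal{X}=(X,d_X,\mu_X)$ with $d_X$ the restriction of the Euclidean distance of $\mathbb{R}^2$ and $\mu_X$ arclength measure normalized to total mass one. The global distance distribution is $H_{\mathcal{X}}(r)=\mu_X\otimes\mu_X(\{(x,x')\in X\times X: d_X(x,x')\le r\})$, $r\geq0$. *)

(* Defs.v *)
From Stdlib Require Import Reals.
Open Scope R_scope.

Definition dist2 (x1 y1 x2 y2 : R) : R := sqrt ((x1 - x2)^2 + (y1 - y2)^2).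

Definition rect_cover_sum (A : R -> R -> Prop) (S : R) : Prop :=
  exists a b c d : nat -> R,
    (forall n, a n <= b n /\ c n <= d n) /\
    (forall s t, A s t -> exists n, a n <= s <= b n /\ c n <= t <= d n) /\
    infinite_sum (fun n => (b n - a n) * (d n - c n)) S.

(* m is the two-dimensional Lebesgue (outer) measure of A:
   the infimum of the total areas of countable rectangle covers. *)
Definition lebesgue2 (A : R -> R -> Prop) (m : R) : Prop :=
  (forall S, rect_cover_sum A S -> m <= S) /\
  (forall m', (forall S, rect_cover_sum A S -> m' <= S) -> m' <= m).

(* For a closed curve given by an arclength (unit-speed) L-periodic
   parametrization t |-> (gx t, gy t), the pairs of parameters in [0,L)^2
   whose images are at Euclidean distance <= r.  The normalized arclength
   measure mu_X is the push-forward of Lebesgue measure on [0,L) divided by L,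
   so mu_X (x) mu_X of {d_X <= r} is lebesgue2 of this set divided by L^2. *)
Definition close_pairs (gx gy : R -> R) (L r : R) : R -> R -> Prop :=
  fun s t => 0 <= s < L /\ 0 <= t < L /\ dist2 (gx s) (gy s) (gx t) (gy t) <= r.

Definition dist_distr (gx gy : R -> R) (L r h : R) : Prop :=
  exists m, lebesgue2 (close_pairs gx gy L r) m /\ h = m / L ^ 2.

(* (gx,gy) : R -> R^2 is a C^2, unit-speed, L-periodic parametrization,
   injective on [0,L): i.e. an arclength parametrization of a C^2 simple
   closed curve of length L. *)
Definition C2_simple_closed_arclength (gx gy : R -> R) (L : R) : Prop :=
  0 < L /\
  (exists gx1 gx2 gy1 gy2 : R -> R,
     (forall t, derivable_pt_lim gx t (gx1 t)) /\
     (forall t, derivable_pt_lim gx1 t (gx2 t)) /\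
     (forall t, derivable_pt_lim gy t (gy1 t)) /\
     (forall t, derivable_pt_lim gy1 t (gy2 t)) /\
     continuity gx2 /\ continuity gy2 /\
     (forall t, (gx1 t)^2 + (gy1 t)^2 = 1)) /\
  (forall t, gx (t + L) = gx t /\ gy (t + L) = gy t) /\
  (forall s t, 0 <= s < L -> 0 <= t < L ->
     gx s = gx t -> gy s = gy t -> s = t).

(* Main.v *)
Require Import Defs.
From Stdlib Require Import Reals.
From Stdlib Require Import Lra Lia Psatz Classical ZArith Arith.
Open Scope R_scope.

Fixpoint sm (n:nat) (f:nat->R) : R :=
  match n with O => 0 | S k => sm k f + f k end.

Lemma sm_ext n f g : (forall i, (i < n)%nat -> f i = g i) -> sm n f = sm n g.
Proof. induction n; simpl; intros H; auto. rewrite IHn; [rewrite H|]; auto; intros; apply H; lia. Qed.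

Lemma sm_le n f g : (forall i, (i < n)%nat -> f i <= g i) -> sm n f <= sm n g.
Proof. induction n; simpl; intros H; [lra|]. assert (f n <= g n) by (apply H; lia).
  assert (sm n f <= sm n g) by (apply IHn; intros; apply H; lia). lra. Qed.

Lemma sm_plus n f g : sm n (fun i => f i + g i) = sm n f + sm n g.
Proof. induction n; simpl; [lra|]. rewrite IHn; lra. Qed.

Lemma sm_minus n f g : sm n (fun i => f i - g i) = sm n f - sm n g.
Proof. induction n; simpl; [lra|]. rewrite IHn; lra. Qed.

Lemma sm_scal n c f : sm n (fun i => c * f i) = c * sm n f.
Proof. induction n; simpl; [lra|]. rewrite IHn; lra. Qed.

Lemma sm_const n c : sm n (fun _ => c) = INR n * c.
Proof. induction n; simpl sm; [simpl; lra|]. rewrite IHn, S_INR; lra. Qed.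

Lemma sm_nonneg n f : (forall i, (i < n)%nat -> 0 <= f i) -> 0 <= sm n f.
Proof. intros H. replace 0 with (sm n (fun _ => 0)) by (rewrite sm_const; lra). apply sm_le; auto. Qed.

Lemma sm_swap n m (f : nat -> nat -> R) :
  sm n (fun i => sm m (fun j => f i j)) = sm m (fun j => sm n (fun i => f i j)).
Proof. induction n; simpl.
  - rewrite sm_const; lra.
  - rewrite IHn, <- sm_plus; auto. Qed.

Lemma sm_prod n m f g :
  sm n (fun i => sm m (fun j => f i * g j)) = sm n f * sm m g.
Proof. rewrite Rmult_comm, <- sm_scal. apply sm_ext; intros.
  rewrite Rmult_comm, <- sm_scal. apply sm_ext; intros. lra. Qed.

Lemma sm_add n m f : sm (n + m) f = sm n f + sm m (fun j => f (n + j)%nat).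
Proof. induction m; simpl. rewrite Nat.add_0_r; lra.
  rewrite Nat.add_succ_r; simpl. rewrite IHm; lra. Qed.

Lemma sm_mul n m f : sm (n * m) f = sm n (fun i => sm m (fun j => f (i * m + j)%nat)).
Proof. induction n; simpl; auto. rewrite Nat.add_comm, sm_add, IHn. reflexivity. Qed.

Lemma sm_sum_f_R0 N f : sm (S N) f = sum_f_R0 f N.
Proof. induction N as [|N IH]; simpl; [lra|]. simpl in IH. rewrite <- IH. reflexivity. Qed.

Lemma sm_abs n f : Rabs (sm n f) <= sm n (fun i => Rabs (f i)).
Proof. induction n; simpl. rewrite Rabs_R0; lra.
  eapply Rle_trans; [apply Rabs_triang|]. lra. Qed.

Lemma sm_ge_term n f k : (k < n)%nat -> (forall i, (i < n)%nat -> 0 <= f i) -> f k <= sm n f.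
Proof. induction n; intros Hk H; [lia|]. simpl. destruct (Nat.eq_dec k n).
  - subst. assert (0 <= sm n f) by (apply sm_nonneg; intros; apply H; lia). lra.
  - assert (f k <= sm n f) by (apply IHn; [lia| intros; apply H; lia]).
    assert (0 <= f n) by (apply H; lia). lra. Qed.

Lemma real_ind (a b : R) (Q : R -> R -> Prop) :
  a <= b ->
  (forall x, a <= x <= b -> exists e, 0 < e /\
      forall u v, x - e < u -> u <= v -> v < x + e -> Q u v) ->
  (forall u v w, u <= v -> v <= w -> Q u v -> Q v w -> Q u w) ->
  Q a b.
Proof.
  intros Hab Hloc Hcat.
  set (E := fun x => a <= x <= b /\ Q a x).
  assert (Haa : Q a a).
  { destruct (Hloc a) as [e [He H]]; [lra|]. apply H; lra. }
  assert (Hb : bound E) by (exists b; intros x [Hx _]; lra).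
  assert (Hne : exists x, E x) by (exists a; split; [lra|auto]).
  destruct (completeness E Hb Hne) as [c [Hub Hlub]].
  assert (Hac : a <= c) by (apply Hub; split; [lra|auto]).
  assert (Hcb : c <= b) by (apply Hlub; intros x [Hx _]; lra).
  destruct (Hloc c) as [e [He H]]; [lra|].
  assert (Hx : exists x, E x /\ c - e < x).
  { apply NNPP; intro Hn.
    assert (c <= c - e); [|lra].
    apply Hlub. intros x Ex. destruct (Rle_dec x (c - e)); auto.
    exfalso; apply Hn; exists x; split; auto; lra. }
  destruct Hx as [x [[Hx1 Hx2] Hx3]].
  assert (Hxc : x <= c) by (apply Hub; split; auto).
  set (v := Rmin b (c + e/2)).
  assert (Hv1 : v <= b) by apply Rmin_l.
  assert (Hv2 : v <= c + e/2) by apply Rmin_r.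
  assert (Hxv : x <= v) by (unfold v; apply Rmin_glb; lra).
  assert (Qav : Q a v).
  { apply Hcat with x; try lra; auto. apply H; lra. }
  assert (v <= c) by (apply Hub; split; auto; lra).
  assert (v = b).
  { unfold v in *. destruct (Rle_dec b (c + e/2)).
    - rewrite Rmin_left; auto.
    - rewrite Rmin_right in *; lra. }
  rewrite <- H1; auto.
Qed.

Lemma compact_rect a b c d (U : nat -> R -> R -> Prop) :
  a <= b -> c <= d ->
  (forall k x y, U k x y -> exists e, 0 < e /\
      forall x' y', Rabs (x' - x) < e -> Rabs (y' - y) < e -> U k x' y') ->
  (forall x y, a <= x <= b -> c <= y <= d -> exists k, U k x y) ->
  exists N, forall x y, a <= x <= b -> c <= y <= d -> exists k, (k < N)%nat /\ U k x y.
Proof.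
  intros Hab Hcd Hop Hcov.
  set (Q1 := fun u v => exists N, forall x y, u <= x <= v -> c <= y <= d ->
                          exists k, (k < N)%nat /\ U k x y).
  change (Q1 a b). apply real_ind; auto.
  - intros x Hx.
    set (Q2 := fun u v => exists e, 0 < e /\ exists N, forall x' y,
               Rabs (x' - x) < e -> u <= y <= v -> exists k, (k < N)%nat /\ U k x' y).
    assert (HQ2 : Q2 c d).
    { apply real_ind; auto.
      - intros y Hy. destruct (Hcov x y Hx Hy) as [k Hk].
        destruct (Hop k x y Hk) as [e [He He2]].
        exists e; split; auto. intros u v Hu Huv Hv.
        exists e; split; auto. exists (S k). intros x' y' Hx' Hy'.
        exists k; split; [lia|]. apply He2; auto.
        apply Rabs_def1; lra.
      - intros u v w _ _ [e1 [He1 [N1 H1]]] [e2 [He2 [N2 H2]]].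
        exists (Rmin e1 e2); split; [apply Rmin_pos; auto|].
        exists (Nat.max N1 N2). intros x' y Hx' Hy.
        assert (Rabs (x' - x) < e1) by (eapply Rlt_le_trans; [apply Hx'|apply Rmin_l]).
        assert (Rabs (x' - x) < e2) by (eapply Rlt_le_trans; [apply Hx'|apply Rmin_r]).
        destruct (Rle_dec y v).
        + destruct (H1 x' y) as [k [Hk Uk]]; auto; try lra.
          exists k; split; auto; lia.
        + destruct (H2 x' y) as [k [Hk Uk]]; auto; try lra.
          exists k; split; auto; lia. }
    destruct HQ2 as [e [He [N HN]]].
    exists e; split; auto. intros u v Hu Huv Hv. exists N.
    intros x' y Hx' Hy. apply HN; auto. apply Rabs_def1; lra.
  - intros u v w _ _ [N1 H1] [N2 H2]. exists (Nat.max N1 N2).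
    intros x y Hx Hy. destruct (Rle_dec x v).
    + destruct (H1 x y) as [k [Hk Uk]]; auto; try lra. exists k; split; auto; lia.
    + destruct (H2 x y) as [k [Hk Uk]]; auto; try lra. exists k; split; auto; lia.
Qed.

Lemma fin_bound (n : nat) (P : nat -> nat -> Prop) :
  (forall i N N', (N <= N')%nat -> P i N -> P i N') ->
  (forall i, (i < n)%nat -> exists N, P i N) ->
  exists N, forall i, (i < n)%nat -> P i N.
Proof.
  intros Hm. induction n; intros H.
  - exists O; intros; lia.
  - destruct IHn as [N1 H1]. intros; apply H; lia.
    destruct (H n) as [N2 H2]; [lia|].
    exists (Nat.max N1 N2). intros i Hi. destruct (Nat.eq_dec i n).
    + subst. apply Hm with N2; auto; lia.
    + apply Hm with N1; [lia|]. apply H1; lia.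
Qed.

Lemma nat_above (x : R) : exists M : nat, x < INR M.
Proof.
  destruct (archimed x) as [H1 H2].
  destruct (Z.lt_ge_cases (up x) 0).
  - exists O. simpl. apply Rlt_trans with (IZR (up x)); auto. apply IZR_lt; auto.
  - exists (Z.to_nat (up x)). rewrite INR_IZR_INZ, Z2Nat.id; auto; lia.
Qed.

Definition indi (a b x : R) : R :=
  if Rle_dec a x then if Rle_dec x b then 1 else 0 else 0.

Lemma ind_01 a b x : indi a b x = 0 \/ indi a b x = 1.
Proof. unfold indi; destruct (Rle_dec a x); destruct (Rle_dec x b); auto. Qed.

Lemma ind_nonneg a b x : 0 <= indi a b x.
Proof. destruct (ind_01 a b x) as [H|H]; rewrite H; lra. Qed.

Lemma ind_le1 a b x : indi a b x <= 1.
Proof. destruct (ind_01 a b x) as [H|H]; rewrite H; lra. Qed.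

Lemma ind_1 a b x : a <= x <= b -> indi a b x = 1.
Proof. intros [H1 H2]; unfold indi; destruct (Rle_dec a x); destruct (Rle_dec x b); auto; lra. Qed.

Lemma ind_0 a b x : ~ (a <= x <= b) -> indi a b x = 0.
Proof. intros H; unfold indi; destruct (Rle_dec a x); destruct (Rle_dec x b); auto; exfalso; apply H; lra. Qed.

Lemma ind_pos a b x : 0 < indi a b x -> a <= x <= b.
Proof. unfold indi; destruct (Rle_dec a x); destruct (Rle_dec x b); auto; lra. Qed.

Lemma ind_scale a b x M : 0 < M -> indi a b (x / M) = indi (M * a) (M * b) x.
Proof. intros HM.
  assert (E1 : a <= x / M <-> M * a <= x).
  { split; intro H.
    - apply Rmult_le_compat_l with (r := M) in H; [|lra].
      replace (M * (x / M)) with x in H by (field; lra). auto.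
    - apply Rmult_le_reg_l with M; auto. replace (M * (x / M)) with x by (field; lra). auto. }
  assert (E2 : x / M <= b <-> x <= M * b).
  { split; intro H.
    - apply Rmult_le_compat_l with (r := M) in H; [|lra].
      replace (M * (x / M)) with x in H by (field; lra). auto.
    - apply Rmult_le_reg_l with M; auto. replace (M * (x / M)) with x by (field; lra). auto. }
  unfold indi.
  destruct (Rle_dec a (x/M)) as [h1|h1]; destruct (Rle_dec (M*a) x) as [h2|h2];
  try tauto;
  destruct (Rle_dec (x/M) b) as [h3|h3]; destruct (Rle_dec x (M*b)) as [h4|h4]; tauto.
Qed.

Definition cnt (a b : R) (P : nat) : R := sm P (fun p => indi a b (INR p)).

Lemma cnt_ext a b b' P : INR P - 1 <= b -> INR P - 1 <= b' -> cnt a b P = cnt a b' P.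
Proof. intros H1 H2. unfold cnt. apply sm_ext. intros i Hi.
  assert (INR i + 1 <= INR P) by (rewrite <- S_INR; apply le_INR; lia).
  unfold indi. destruct (Rle_dec a (INR i)); auto.
  destruct (Rle_dec (INR i) b); destruct (Rle_dec (INR i) b'); auto; lra. Qed.

Lemma cnt_upper P a b : a <= b -> cnt a b P <= b - a + 1.
Proof.
  revert a b. induction P; intros a b Hab.
  - unfold cnt; simpl; lra.
  - unfold cnt; simpl sm. fold (cnt a b P).
    destruct (Rle_dec a (INR P)) as [h1|h1]; destruct (Rle_dec (INR P) b) as [h2|h2].
    + rewrite ind_1 by lra.
      rewrite (cnt_ext a b (INR P - 1)) by lra.
      destruct (Rle_dec a (INR P - 1)).
      * specialize (IHP a (INR P - 1) r). lra.
      * assert (cnt a (INR P - 1) P <= 0); [|lra].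
        unfold cnt. replace 0 with (sm P (fun _ => 0)) by (rewrite sm_const; lra).
        apply sm_le. intros i Hi. rewrite ind_0; [lra|].
        assert (INR i + 1 <= INR P) by (rewrite <- S_INR; apply le_INR; lia). lra.
    + rewrite ind_0 by lra. specialize (IHP a b Hab); lra.
    + rewrite ind_0 by lra. specialize (IHP a b Hab); lra.
    + rewrite ind_0 by lra. specialize (IHP a b Hab); lra.
Qed.

Lemma cnt_nonneg a b P : 0 <= cnt a b P.
Proof. apply sm_nonneg; intros; apply ind_nonneg. Qed.

Lemma cnt_lower P a b : 0 <= a -> b < INR P -> b - a - 1 < cnt a b P.
Proof.
  revert a b. induction P; intros a b Ha Hb.
  - simpl in Hb. unfold cnt; simpl; lra.
  - unfold cnt; simpl sm. fold (cnt a b P). rewrite S_INR in Hb.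
    pose proof (ind_nonneg a b (INR P)).
    destruct (Rlt_dec b (INR P)).
    + specialize (IHP a b Ha r). lra.
    + destruct (Rle_dec a (INR P)).
      * rewrite ind_1 by lra.
        assert (INR P - a - 1 <= cnt a b P).
        { set (c := cnt a b P). apply Rnot_lt_le. intro Hc.
          set (b' := Rmax (INR P - 1) ((INR P + c + a + 1)/2)).
          assert (b' < INR P).
          { unfold b'. apply Rmax_lub_lt; lra. }
          assert (INR P - 1 <= b') by apply Rmax_l.
          assert ((INR P + c + a + 1)/2 <= b') by apply Rmax_r.
          specialize (IHP a b' Ha H0).
          rewrite (cnt_ext a b' b) in IHP by lra. unfold c in *. lra. }
        lra.
      * pose proof (cnt_nonneg a b P). lra.
Qed.

(* pairwise disjoint intervals *)
Lemma ind_disj_sum n h d x : 0 < d -> sm n (fun i => indi (INR i * h + d) ((INR i + 1) * h - d) x) <= 1.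
Proof.
  intros Hd. induction n; simpl; [lra|].
  destruct (ind_01 (INR n * h + d) ((INR n + 1) * h - d) x) as [H|H]; rewrite H; [lra|].
  assert (Hx : INR n * h + d <= x <= (INR n + 1) * h - d) by (apply ind_pos; lra).
  assert (sm n (fun i => indi (INR i * h + d) ((INR i + 1) * h - d) x) <= 0); [|lra].
  replace 0 with (sm n (fun _ => 0)) by (rewrite sm_const; lra).
  apply sm_le. intros i Hi. rewrite ind_0; [lra|]. intros [H1 H2].
  assert (INR i + 1 <= INR n) by (rewrite <- S_INR; apply le_INR; lia).
  destruct (Rle_dec 0 h).
  - assert ((INR i + 1) * h <= INR n * h) by (apply Rmult_le_compat_r; lra). lra.
  - assert (INR i * h + d <= (INR i + 1) * h - d) by lra. nra.
Qed.

Definition b2r (b : bool) : R := if b then 1 else 0.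

Lemma b2r_01 b : b2r b = 0 \/ b2r b = 1.
Proof. destruct b; simpl; auto. Qed.

Lemma count_area_M (n N M : nat) (h dl : R) (sel : nat -> nat -> bool) (a b c d : nat -> R) :
  0 < dl -> 2 * dl < h -> (forall k, a k <= b k /\ c k <= d k) ->
  (forall i j x y, (i < n)%nat -> (j < n)%nat -> sel i j = true ->
     INR i * h + dl <= x <= (INR i + 1) * h - dl ->
     INR j * h + dl <= y <= (INR j + 1) * h - dl ->
     exists k, (k < N)%nat /\ a k <= x <= b k /\ c k <= y <= d k) ->
  1 <= INR M * (h - 2 * dl) ->
  (INR M * (h - 2 * dl) - 1) ^ 2 * sm n (fun i => sm n (fun j => b2r (sel i j)))
  <= sm N (fun k => (INR M * (b k - a k) + 1) * (INR M * (d k - c k) + 1)).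
Proof.
  intros Hdl Hh Hab Hcov HM.
  set (Mr := INR M).
  assert (HMr : 0 < Mr) by (unfold Mr in *; nra).
  assert (HM' : 1 <= Mr * (h - 2 * dl)) by exact HM. clear HM.
  destruct (nat_above (Mr * INR n * h)) as [P HP].
  set (lo := fun i : nat => INR i * h + dl).
  set (hi := fun i : nat => (INR i + 1) * h - dl).
  set (X := fun p : nat => INR p / Mr).
  set (f := fun p q => sm n (fun i => sm n (fun j =>
              b2r (sel i j) * (indi (lo i) (hi i) (X p) * indi (lo j) (hi j) (X q))))).
  set (g := fun p q => sm N (fun k => indi (a k) (b k) (X p) * indi (c k) (d k) (X q))).
  assert (Hfg : forall p q, f p q <= g p q).
  { intros p q.
    assert (Hg0 : 0 <= g p q).
    { apply sm_nonneg; intros. apply Rmult_le_pos; apply ind_nonneg. }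
    destruct (classic (exists i j, (i < n)%nat /\ (j < n)%nat /\ sel i j = true /\
                 lo i <= X p <= hi i /\ lo j <= X q <= hi j)) as [Hex|Hnex].
    - destruct Hex as [i [j [Hi [Hj [Hs [Hx Hy]]]]]].
      destruct (Hcov i j (X p) (X q) Hi Hj Hs Hx Hy) as [k [Hk [Hxk Hyk]]].
      assert (1 <= g p q).
      { unfold g. eapply Rle_trans; [|apply sm_ge_term with (k := k); auto].
        - rewrite ind_1, ind_1; auto; lra.
        - intros; apply Rmult_le_pos; apply ind_nonneg. }
      assert (f p q <= 1); [|lra].
      unfold f. eapply Rle_trans.
      + apply sm_le with (g := fun i => sm n (fun j => indi (lo i) (hi i) (X p) * indi (lo j) (hi j) (X q))).
        intros i0 _. apply sm_le. intros j0 _.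
        destruct (b2r_01 (sel i0 j0)) as [E|E]; rewrite E;
          pose proof (ind_nonneg (lo i0) (hi i0) (X p));
          pose proof (ind_nonneg (lo j0) (hi j0) (X q)); nra.
      + rewrite (sm_prod n n (fun i => indi (lo i) (hi i) (X p)) (fun j => indi (lo j) (hi j) (X q))).
        pose proof (ind_disj_sum n h dl (X p) Hdl).
        pose proof (ind_disj_sum n h dl (X q) Hdl).
        assert (0 <= sm n (fun i => indi (lo i) (hi i) (X p))) by (apply sm_nonneg; intros; apply ind_nonneg).
        assert (0 <= sm n (fun i => indi (lo i) (hi i) (X q))) by (apply sm_nonneg; intros; apply ind_nonneg).
        unfold lo, hi in *. nra.
    - assert (f p q = 0); [|lra].
      unfold f. replace 0 with (sm n (fun _ => 0)) by (rewrite sm_const; lra).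
      apply sm_ext; intros i Hi.
      replace 0 with (sm n (fun _ => 0)) by (rewrite sm_const; lra).
      apply sm_ext; intros j Hj.
      destruct (sel i j) eqn:Es; simpl; [|lra].
      destruct (ind_01 (lo i) (hi i) (X p)) as [E1|E1]; rewrite E1; [lra|].
      destruct (ind_01 (lo j) (hi j) (X q)) as [E2|E2]; rewrite E2; [lra|].
      exfalso; apply Hnex. exists i, j. split; auto; split; auto; split; auto.
      split; apply ind_pos; [rewrite E1|rewrite E2]; lra. }
  assert (Hsum : sm P (fun p => sm P (fun q => f p q)) <= sm P (fun p => sm P (fun q => g p q))).
  { apply sm_le; intros; apply sm_le; intros; apply Hfg. }
  assert (HX : forall al be, sm P (fun p => indi al be (X p)) = cnt (Mr * al) (Mr * be) P).
  { intros. unfold cnt. apply sm_ext. intros. unfold X. apply ind_scale; auto. }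
  assert (Ef : sm P (fun p => sm P (fun q => f p q)) =
     sm n (fun i => sm n (fun j => b2r (sel i j) *
         (cnt (Mr * lo i) (Mr * hi i) P * cnt (Mr * lo j) (Mr * hi j) P)))).
  { unfold f. rewrite sm_swap. erewrite sm_ext.
    2:{ intros q _. rewrite sm_swap. reflexivity. }
    rewrite sm_swap. apply sm_ext; intros i _.
    erewrite sm_ext.
    2:{ intros q _. rewrite sm_swap. reflexivity. }
    rewrite sm_swap. apply sm_ext; intros j _.
    rewrite <- HX, <- HX, <- sm_prod, <- sm_scal.
    rewrite sm_swap. apply sm_ext; intros p _. rewrite <- sm_scal. apply sm_ext; intros q _. lra. }
  assert (Eg : sm P (fun p => sm P (fun q => g p q)) =
     sm N (fun k => cnt (Mr * a k) (Mr * b k) P * cnt (Mr * c k) (Mr * d k) P)).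
  { unfold g. rewrite sm_swap. erewrite sm_ext.
    2:{ intros q _. rewrite sm_swap. reflexivity. }
    rewrite sm_swap. apply sm_ext; intros k _.
    rewrite <- HX, <- HX, <- sm_prod. rewrite sm_swap. reflexivity. }
  rewrite Ef, Eg in Hsum.
  assert (Hcl : forall i, (i < n)%nat -> Mr * (h - 2 * dl) - 1 <= cnt (Mr * lo i) (Mr * hi i) P).
  { intros i Hi.
    assert (INR i + 1 <= INR n) by (rewrite <- S_INR; apply le_INR; lia).
    assert (0 <= INR i) by apply pos_INR.
    assert (0 < h) by lra.
    assert (hi i <= INR n * h - dl) by (unfold hi; nra).
    apply Rlt_le. eapply Rle_lt_trans; [|apply cnt_lower].
    - unfold lo, hi; lra.
    - unfold lo. apply Rmult_le_pos; [lra|].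
      assert (0 <= INR i * h) by (apply Rmult_le_pos; lra). lra.
    - apply Rle_lt_trans with (Mr * (INR n * h)); [|lra].
      apply Rmult_le_compat_l; lra. }
  eapply Rle_trans; [|eapply Rle_trans; [apply Hsum|]].
  - rewrite <- sm_scal. apply sm_le; intros i Hi.
    rewrite <- sm_scal. apply sm_le; intros j Hj.
    pose proof (Hcl i Hi). pose proof (Hcl j Hj).
    destruct (b2r_01 (sel i j)) as [E|E]; rewrite E; [lra|].
    rewrite Rmult_1_r, Rmult_1_l. simpl pow. rewrite Rmult_1_r. apply Rmult_le_compat; lra.
  - apply sm_le; intros k _.
    destruct (Hab k) as [h1 h2].
    pose proof (cnt_upper P (Mr * a k) (Mr * b k)).
    pose proof (cnt_upper P (Mr * c k) (Mr * d k)).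
    pose proof (cnt_nonneg (Mr * a k) (Mr * b k) P).
    pose proof (cnt_nonneg (Mr * c k) (Mr * d k) P).
    assert (Mr * a k <= Mr * b k) by nra.
    assert (Mr * c k <= Mr * d k) by nra.
    specialize (H H3). specialize (H0 H4).
    apply Rmult_le_compat; auto; lra.
Qed.

Lemma count_area (n N : nat) (h dl : R) (sel : nat -> nat -> bool) (a b c d : nat -> R) :
  0 < dl -> 2 * dl < h -> (forall k, a k <= b k /\ c k <= d k) ->
  (forall i j x y, (i < n)%nat -> (j < n)%nat -> sel i j = true ->
     INR i * h + dl <= x <= (INR i + 1) * h - dl ->
     INR j * h + dl <= y <= (INR j + 1) * h - dl ->
     exists k, (k < N)%nat /\ a k <= x <= b k /\ c k <= y <= d k) ->
  (h - 2 * dl) ^ 2 * sm n (fun i => sm n (fun j => b2r (sel i j)))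
  <= sm N (fun k => (b k - a k) * (d k - c k)).
Proof.
  intros Hdl Hh Hab Hcov.
  set (w := h - 2 * dl). assert (Hw : 0 < w) by (unfold w; lra).
  set (C := sm n (fun i => sm n (fun j => b2r (sel i j)))).
  set (A := sm N (fun k => (b k - a k) * (d k - c k))).
  set (B1 := sm N (fun k => (b k - a k) + (d k - c k))).
  assert (HC : 0 <= C).
  { apply sm_nonneg; intros; apply sm_nonneg; intros. destruct (b2r_01 (sel i i0)) as [E|E]; rewrite E; lra. }
  assert (HB1 : 0 <= B1).
  { apply sm_nonneg; intros. destruct (Hab i); lra. }
  assert (HN : 0 <= INR N) by apply pos_INR.
  assert (HMgen : forall M : nat, 1 <= INR M * w ->
     (INR M * w - 1) ^ 2 * C <= INR M ^ 2 * A + INR M * B1 + INR N).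
  { intros M HM. eapply Rle_trans.
    - apply (count_area_M n N M h dl sel a b c d); auto.
    - unfold A, B1. rewrite <- sm_scal, <- sm_scal, <- (Rmult_1_r (INR N)), <- sm_const.
      rewrite <- sm_plus, <- sm_plus. apply Req_le, sm_ext. intros. ring. }
  apply Rnot_lt_le. intro Hlt. fold w C A in Hlt.
  set (g := w ^ 2 * C - A). assert (Hg : 0 < g) by (unfold g; lra).
  set (K := B1 + 2 * w * C + INR N).
  destruct (nat_above (Rmax (Rmax 1 (1 / w)) (K / g))) as [M HM].
  assert (H1 : 1 < INR M) by (eapply Rle_lt_trans; [|apply HM]; eapply Rle_trans; [|apply Rmax_l]; apply Rmax_l).
  assert (H2 : 1 / w < INR M) by (eapply Rle_lt_trans; [|apply HM]; eapply Rle_trans; [|apply Rmax_l]; apply Rmax_r).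
  assert (H3 : K / g < INR M) by (eapply Rle_lt_trans; [|apply HM]; apply Rmax_r).
  assert (Hmw : 1 <= INR M * w).
  { apply Rmult_lt_compat_r with (r := w) in H2; auto.
    unfold Rdiv in H2. rewrite Rmult_1_l, Rinv_l in H2; lra. }
  specialize (HMgen M Hmw).
  assert (H4 : K < INR M * g).
  { apply Rmult_lt_compat_r with (r := g) in H3; auto.
    unfold Rdiv in H3. rewrite Rmult_assoc, Rinv_l, Rmult_1_r in H3; lra. }
  set (m := INR M) in *.
  assert (m * m * g <= m * K).
  { unfold g, K. assert (0 <= m * B1) by nra. assert (INR N <= m * INR N) by nra.
    assert (0 <= C) by auto. nra. }
  assert (m * K < m * (m * g)) by (apply Rmult_lt_compat_l; lra).
  lra.
Qed.

Lemma geom_sum N : sm N (fun k => / 2 ^ (S k)) = 1 - / 2 ^ N.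
Proof.
  induction N. simpl; lra.
  change (sm (S N) (fun k => / 2 ^ (S k))) with (sm N (fun k => / 2 ^ (S k)) + / 2 ^ (S N)).
  rewrite IHN. simpl pow. assert (0 < 2 ^ N) by (apply pow_lt; lra). field. lra.
Qed.

Lemma infsum_partial f S N : infinite_sum f S -> (forall n, 0 <= f n) -> sm N f <= S.
Proof.
  intros Hs Hf. destruct N.
  - simpl. pose proof (sum_incr f 0 S Hs Hf). simpl in H. pose proof (Hf O). lra.
  - rewrite sm_sum_f_R0. apply sum_incr; auto.
Qed.

Lemma key_step (n : nat) (h : R) (sel : nat -> nat -> bool) (A : R -> R -> Prop) Sm ep dl :
  0 < h ->
  (forall i j s t, (i < n)%nat -> (j < n)%nat -> sel i j = true ->
     INR i * h <= s < (INR i + 1) * h -> INR j * h <= t < (INR j + 1) * h -> A s t) ->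
  rect_cover_sum A Sm -> 0 < ep <= 1 -> 0 < dl -> 4 * dl <= h ->
  (h - 2 * dl) ^ 2 * sm n (fun i => sm n (fun j => b2r (sel i j))) <= Sm + ep.
Proof.
  intros Hh HA [a [b [c [d [Hab [Hcov Hsum]]]]]] Hep Hdl Hdlh.
  set (den := fun k => (2 * ((b k - a k) + (d k - c k)) + 4) * 2 ^ (S k)).
  assert (Hden : forall k, 8 <= den k).
  { intros k. unfold den. destruct (Hab k).
    assert (2 <= 2 ^ S k).
    { simpl. assert (1 <= 2 ^ k) by (apply pow_R1_Rle; lra). lra. }
    assert (4 <= 2 * (b k - a k + (d k - c k)) + 4) by lra. nra. }
  set (e := fun k => ep / den k).
  assert (He : forall k, 0 < e k /\ e k <= 1).
  { intros k. unfold e. pose proof (Hden k). split.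
    - apply Rdiv_lt_0_compat; lra.
    - unfold Rdiv. apply Rle_trans with (1 * / den k).
      + apply Rmult_le_compat_r; [apply Rlt_le, Rinv_0_lt_compat|]; lra.
      + rewrite Rmult_1_l. rewrite <- Rinv_1. apply Rinv_le_contravar; lra. }
  set (U := fun k x y => a k - e k < x < b k + e k /\ c k - e k < y < d k + e k).
  assert (Hop : forall k x y, U k x y -> exists e', 0 < e' /\
      forall x' y', Rabs (x' - x) < e' -> Rabs (y' - y) < e' -> U k x' y').
  { intros k x y [[h1 h2] [h3 h4]].
    exists (Rmin (Rmin (x - (a k - e k)) (b k + e k - x)) (Rmin (y - (c k - e k)) (d k + e k - y))).
    split.
    - repeat apply Rmin_pos; lra.
    - intros x' y' Hx Hy.
      pose proof (Rmin_l (Rmin (x - (a k - e k)) (b k + e k - x)) (Rmin (y - (c k - e k)) (d k + e k - y))).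
      pose proof (Rmin_r (Rmin (x - (a k - e k)) (b k + e k - x)) (Rmin (y - (c k - e k)) (d k + e k - y))).
      pose proof (Rmin_l (x - (a k - e k)) (b k + e k - x)).
      pose proof (Rmin_r (x - (a k - e k)) (b k + e k - x)).
      pose proof (Rmin_l (y - (c k - e k)) (d k + e k - y)).
      pose proof (Rmin_r (y - (c k - e k)) (d k + e k - y)).
      apply Rabs_def2 in Hx. apply Rabs_def2 in Hy.
      unfold U; lra. }
  assert (Hcell : forall i j, (i < n)%nat -> (j < n)%nat -> sel i j = true ->
     exists N, forall x y, INR i * h + dl <= x <= (INR i + 1) * h - dl ->
        INR j * h + dl <= y <= (INR j + 1) * h - dl -> exists k, (k < N)%nat /\ U k x y).
  { intros i j Hi Hj Hs. apply compact_rect; auto; try lra.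
    intros x y Hx Hy. destruct (Hcov x y) as [k [Hxk Hyk]].
    - apply (HA i j); auto; lra.
    - exists k. pose proof (He k). unfold U; lra. }
  destruct (fin_bound n (fun i N => forall j, (j < n)%nat -> sel i j = true ->
        forall x y, INR i * h + dl <= x <= (INR i + 1) * h - dl ->
        INR j * h + dl <= y <= (INR j + 1) * h - dl -> exists k, (k < N)%nat /\ U k x y)) as [N HN].
  { intros i N N' HNN HP j Hj Hs x y Hx Hy. destruct (HP j Hj Hs x y Hx Hy) as [k [Hk Uk]].
    exists k; split; auto; lia. }
  { intros i Hi.
    apply (fin_bound n (fun j N => sel i j = true ->
        forall x y, INR i * h + dl <= x <= (INR i + 1) * h - dl ->
        INR j * h + dl <= y <= (INR j + 1) * h - dl -> exists k, (k < N)%nat /\ U k x y)).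
    - intros j N N' HNN HP Hs x y Hx Hy. destruct (HP Hs x y Hx Hy) as [k [Hk Uk]].
      exists k; split; auto; lia.
    - intros j Hj. destruct (sel i j) eqn:Es.
      + destruct (Hcell i j Hi Hj Es) as [N HN]. exists N. intros _. auto.
      + exists O. intros; discriminate. }
  assert (Hca := count_area n N h dl sel (fun k => a k - e k) (fun k => b k + e k)
                  (fun k => c k - e k) (fun k => d k + e k)).
  eapply Rle_trans; [apply Hca|]; clear Hca.
  - lra.
  - lra.
  - intros k. destruct (Hab k). pose proof (He k). lra.
  - intros i j x y Hi Hj Hs Hx Hy. destruct (HN i Hi j Hj Hs x y Hx Hy) as [k [Hk Uk]].
    exists k. unfold U in Uk. split; auto; lra.
  - apply Rle_trans with (sm N (fun k => (b k - a k) * (d k - c k)) + sm N (fun k => ep * / 2 ^ (S k))).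
    + rewrite <- sm_plus. apply sm_le. intros k _.
      destruct (Hab k). destruct (He k).
      assert (E : e k * (2 * ((b k - a k) + (d k - c k)) + 4) = ep * / 2 ^ S k).
      { unfold e, den, Rdiv. assert (0 < 2 ^ S k) by (apply pow_lt; lra). field. split; lra. }
      assert (0 <= b k - a k) by lra. assert (0 <= d k - c k) by lra. nra.
    + rewrite sm_scal, geom_sum.
      assert (sm N (fun k => (b k - a k) * (d k - c k)) <= Sm).
      { apply infsum_partial; auto. intros k; destruct (Hab k); nra. }
      assert (0 < / 2 ^ N) by (apply Rinv_0_lt_compat, pow_lt; lra). nra.
Qed.

Lemma key (n : nat) (h : R) (sel : nat -> nat -> bool) (A : R -> R -> Prop) Sm :
  0 < h ->
  (forall i j s t, (i < n)%nat -> (j < n)%nat -> sel i j = true ->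
     INR i * h <= s < (INR i + 1) * h -> INR j * h <= t < (INR j + 1) * h -> A s t) ->
  rect_cover_sum A Sm ->
  h ^ 2 * sm n (fun i => sm n (fun j => b2r (sel i j))) <= Sm.
Proof.
  intros Hh HA Hc.
  set (C := sm n (fun i => sm n (fun j => b2r (sel i j)))).
  assert (HC : 0 <= C).
  { apply sm_nonneg; intros; apply sm_nonneg; intros. destruct (b2r_01 (sel i i0)) as [E|E]; rewrite E; lra. }
  apply Rnot_lt_le. intro Hlt.
  set (g := h ^ 2 * C - Sm). assert (Hg : 0 < g) by (unfold g; lra).
  set (ep := Rmin 1 (g / 2)). set (dl := Rmin (h / 4) (g / (8 * h * C + 1))).
  assert (Hep : 0 < ep <= 1).
  { unfold ep; split; [apply Rmin_pos; lra|apply Rmin_l]. }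
  assert (Hep2 : ep <= g / 2) by apply Rmin_r.
  assert (H8 : 0 < 8 * h * C + 1) by nra.
  assert (Hdl : 0 < dl) by (unfold dl; apply Rmin_pos; [lra|apply Rdiv_lt_0_compat; lra]).
  assert (Hdl1 : dl <= h / 4) by apply Rmin_l.
  assert (Hdl2 : dl <= g / (8 * h * C + 1)) by apply Rmin_r.
  pose proof (key_step n h sel A Sm ep dl Hh HA Hc Hep Hdl ltac:(lra)). fold C in H.
  assert (Hdl3 : dl * (8 * h * C + 1) <= g).
  { assert (E : g / (8 * h * C + 1) * (8 * h * C + 1) = g) by (field; lra).
    assert (dl * (8 * h * C + 1) <= g / (8 * h * C + 1) * (8 * h * C + 1)) by (apply Rmult_le_compat_r; lra).
    lra. }
  assert ((h - 2 * dl) ^ 2 * C >= h ^ 2 * C - 4 * h * dl * C) by nra.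
  assert (4 * h * dl * C <= g / 2) by nra.
  unfold g in *. lra.
Qed.

Lemma cover_nonneg A Sm : rect_cover_sum A Sm -> 0 <= Sm.
Proof.
  intros [a [b [c [d [Hab [_ Hs]]]]]].
  pose proof (infsum_partial _ _ O Hs). simpl in H. apply H.
  intros k; destruct (Hab k); nra.
Qed.

Lemma leb_upper A m Sm : lebesgue2 A m -> rect_cover_sum A Sm -> m <= Sm.
Proof. intros [H _] Hc; auto. Qed.

Lemma leb_lower A m x : lebesgue2 A m -> (forall Sm, rect_cover_sum A Sm -> x <= Sm) -> x <= m.
Proof. intros [_ H] Hc; auto. Qed.

Lemma leb_nonneg A m : lebesgue2 A m -> 0 <= m.
Proof. intros Hm. apply (leb_lower A); auto. apply cover_nonneg. Qed.

Lemma leb_mono (A B : R -> R -> Prop) mA mB : (forall s t, A s t -> B s t) ->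
  lebesgue2 A mA -> lebesgue2 B mB -> mA <= mB.
Proof.
  intros HAB HA HB. apply (leb_lower B); auto. intros Sm [a [b [c [d [H1 [H2 H3]]]]]].
  apply (leb_upper A); auto. exists a, b, c, d. split; auto.
Qed.

Lemma leb_unique A m1 m2 : lebesgue2 A m1 -> lebesgue2 A m2 -> m1 = m2.
Proof. intros H1 H2. pose proof (leb_mono A A m1 m2 (fun s t h => h) H1 H2).
  pose proof (leb_mono A A m2 m1 (fun s t h => h) H2 H1). lra. Qed.

Lemma sm_stable N f n : (forall k, (N <= k)%nat -> f k = 0) -> (N <= n)%nat -> sm n f = sm N f.
Proof.
  intros Hf. induction n; intros Hn.
  - assert (N = O) by lia. subst; auto.
  - destruct (Nat.eq_dec N (S n)). subst; auto.
    simpl. rewrite IHn by lia. rewrite Hf by lia. lra.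
Qed.

Lemma finite_cover (A : R -> R -> Prop) N (a b c d : nat -> R) :
  (forall k, a k <= b k /\ c k <= d k) ->
  (forall s t, A s t -> exists k, (k < N)%nat /\ a k <= s <= b k /\ c k <= t <= d k) ->
  rect_cover_sum A (sm N (fun k => (b k - a k) * (d k - c k))).
Proof.
  intros Hab Hc.
  set (cut := fun (f : nat -> R) k => if Nat.ltb k N then f k else 0).
  exists (cut a), (cut b), (cut c), (cut d). split; [|split].
  - intros k; unfold cut; destruct (Nat.ltb k N); auto; lra.
  - intros s t Hst. destruct (Hc s t Hst) as [k [Hk H]]. exists k.
    unfold cut. replace (Nat.ltb k N) with true; auto. symmetry; apply Nat.ltb_lt; auto.
  - intros eps Heps. exists N. intros n Hn.
    rewrite <- sm_sum_f_R0. rewrite (sm_stable N).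
    + erewrite sm_ext. unfold Rdist. rewrite Rminus_diag, Rabs_R0; auto.
      intros k Hk. unfold cut. replace (Nat.ltb k N) with true; auto. symmetry; apply Nat.ltb_lt; auto.
    + intros k Hk. unfold cut. replace (Nat.ltb k N) with false. lra.
      symmetry; apply Nat.ltb_ge; auto.
    + lia.
Qed.

Lemma leb_exists (A : R -> R -> Prop) : (exists Sm, rect_cover_sum A Sm) -> { m | lebesgue2 A m }.
Proof.
  intros Hex.
  set (E := fun x => exists Sm, rect_cover_sum A Sm /\ x = - Sm).
  assert (Hb : bound E).
  { exists 0. intros x [Sm [Hc ->]]. pose proof (cover_nonneg A Sm Hc). lra. }
  assert (Hne : exists x, E x) by (destruct Hex as [Sm Hs]; exists (- Sm); unfold E; exists Sm; auto).
  destruct (completeness E Hb Hne) as [l [Hub Hlub]].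
  exists (- l). split.
  - intros Sm Hc. assert (- Sm <= l) by (apply Hub; exists Sm; auto). lra.
  - intros m' Hm'. assert (l <= - m'); [|lra]. apply Hlub.
    intros x [Sm [Hc ->]]. specialize (Hm' Sm Hc). lra.
Qed.

Lemma dist2_nonneg a b c d : 0 <= dist2 a b c d.
Proof. apply sqrt_pos. Qed.

Lemma dist2_sym a b c d : dist2 a b c d = dist2 c d a b.
Proof. unfold dist2. f_equal. ring. Qed.

Lemma dist2_sq a b c d : dist2 a b c d * dist2 a b c d = (a - c) ^ 2 + (b - d) ^ 2.
Proof. unfold dist2. apply sqrt_sqrt. apply Rplus_le_le_0_compat; apply pow2_ge_0. Qed.

Lemma sqrt_le_of_sq x y : 0 <= y -> x <= y * y -> sqrt x <= y.
Proof.
  intros Hy Hx. destruct (Rle_dec 0 x).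
  - rewrite <- (sqrt_square y) by auto. apply sqrt_le_1; nra.
  - rewrite sqrt_neg_0 by lra. lra.
Qed.

Lemma dist2_le_abs a b c d : dist2 a b c d <= Rabs (a - c) + Rabs (b - d).
Proof.
  unfold dist2. apply sqrt_le_of_sq.
  - pose proof (Rabs_pos (a - c)); pose proof (Rabs_pos (b - d)); lra.
  - pose proof (Rabs_pos (a - c)); pose proof (Rabs_pos (b - d)).
    rewrite <- (pow2_abs (a - c)), <- (pow2_abs (b - d)). nra.
Qed.

Lemma dist2_triangle a b c d e f : dist2 a b e f <= dist2 a b c d + dist2 c d e f.
Proof.
  pose proof (dist2_sq a b c d) as H1. pose proof (dist2_sq c d e f) as H2.
  pose proof (dist2_nonneg a b c d). pose proof (dist2_nonneg c d e f).
  set (u := dist2 a b c d) in *. set (v := dist2 c d e f) in *.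
  unfold dist2 at 1. apply sqrt_le_of_sq; [lra|].
  (* Cauchy-Schwarz: (a-c)(c-e)+(b-d)(d-f) <= u v *)
  assert (CS : (a - c) * (c - e) + (b - d) * (d - f) <= u * v).
  { assert (((a - c) * (c - e) + (b - d) * (d - f)) ^ 2 <= (u * v) ^ 2).
    { replace ((u * v) ^ 2) with ((u * u) * (v * v)) by ring. rewrite H1, H2.
      pose proof (pow2_ge_0 ((a - c) * (d - f) - (b - d) * (c - e))).
      assert (E : ((a - c) ^ 2 + (b - d) ^ 2) * ((c - e) ^ 2 + (d - f) ^ 2)
        - ((a - c) * (c - e) + (b - d) * (d - f)) ^ 2 = ((a - c) * (d - f) - (b - d) * (c - e)) ^ 2) by ring.
      lra. }
    assert (0 <= u * v) by nra. nra. }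
  replace ((a - e) ^ 2 + (b - f) ^ 2) with
     (((a - c) ^ 2 + (b - d) ^ 2) + ((c - e) ^ 2 + (d - f) ^ 2) + 2 * ((a - c) * (c - e) + (b - d) * (d - f))) by ring.
  rewrite <- H1, <- H2. nra.
Qed.

Lemma dist2_same a b : dist2 a b a b = 0.
Proof. unfold dist2. replace ((a - a) ^ 2 + (b - b) ^ 2) with 0 by ring. apply sqrt_0. Qed.

Definition Dd (gx gy : R -> R) s t := dist2 (gx s) (gy s) (gx t) (gy t).
Definition pt (L : R) (n i : nat) := INR i * (L / INR n).
Definition Dij gx gy L n i j := Dd gx gy (pt L n i) (pt L n j).
Definition selr gx gy L n r i j : bool := if Rle_dec (Dij gx gy L n i j) r then true else false.
Definition cntD gx gy L n r := sm n (fun i => sm n (fun j => b2r (selr gx gy L n r i j))).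

Lemma locate (n : nat) (h s : R) : 0 <= s < INR n * h ->
  exists i, (i < n)%nat /\ INR i * h <= s <= (INR i + 1) * h.
Proof.
  induction n; intros [H1 H2].
  - simpl in H2. lra.
  - rewrite S_INR in H2. destruct (Rlt_dec s (INR n * h)).
    + destruct IHn as [i [Hi Hs]]; [lra|]. exists i; split; auto.
    + exists n; split; auto. lra.
Qed.

Section Curve.
Variables (gx gy : R -> R) (L : R).
Hypothesis HL : 0 < L.
Hypothesis Lx : forall s t, Rabs (gx s - gx t) <= Rabs (s - t).
Hypothesis Ly : forall s t, Rabs (gy s - gy t) <= Rabs (s - t).

Lemma P_lip s s' : dist2 (gx s) (gy s) (gx s') (gy s') <= 2 * Rabs (s - s').
Proof. eapply Rle_trans; [apply dist2_le_abs|]. pose proof (Lx s s'); pose proof (Ly s s'); lra. Qed.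

Lemma Dd_lip s t s' t' : Dd gx gy s t <= Dd gx gy s' t' + 2 * Rabs (s - s') + 2 * Rabs (t - t').
Proof.
  unfold Dd.
  eapply Rle_trans; [apply (dist2_triangle _ _ (gx s') (gy s'))|].
  eapply Rle_trans; [apply Rplus_le_compat_l; apply (dist2_triangle _ _ (gx t') (gy t'))|].
  pose proof (P_lip s s'). pose proof (P_lip t' t). rewrite Rabs_minus_sym in H0. lra.
Qed.

Lemma measure_upper n r r' m : (1 <= n)%nat ->
  lebesgue2 (close_pairs gx gy L r') m -> r' + 4 * (L / INR n) <= r ->
  m <= (L / INR n) ^ 2 * cntD gx gy L n r.
Proof.
  intros Hn Hm Hr.
  set (h := L / INR n).
  assert (HnR : 0 < INR n) by (apply lt_0_INR; lia).
  assert (Hh : 0 < h) by (unfold h; apply Rdiv_lt_0_compat; auto).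
  assert (Hnh : INR n * h = L) by (unfold h; field; lra).
  set (sel := selr gx gy L n r).
  set (lo := fun k => if sel (k / n)%nat (k mod n)%nat then INR (k / n) * h else 0).
  set (hi := fun k => if sel (k / n)%nat (k mod n)%nat then (INR (k / n) + 1) * h else 0).
  set (lo' := fun k => if sel (k / n)%nat (k mod n)%nat then INR (k mod n) * h else 0).
  set (hi' := fun k => if sel (k / n)%nat (k mod n)%nat then (INR (k mod n) + 1) * h else 0).
  assert (Hcov : rect_cover_sum (close_pairs gx gy L r')
            (sm (n * n) (fun k => (hi k - lo k) * (hi' k - lo' k)))).
  { apply finite_cover.
    - intros k. unfold lo, hi, lo', hi'. destruct (sel (k / n)%nat (k mod n)%nat); lra.
    - intros s t [Hs [Ht Hd]].
      destruct (locate n h s) as [i [Hi Hsi]]; [lra|].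
      destruct (locate n h t) as [j [Hj Htj]]; [lra|].
      exists (i * n + j)%nat. split; [nia|].
      assert (E1 : ((i * n + j) / n = i)%nat).
      { rewrite Nat.div_add_l by lia. rewrite Nat.div_small by lia. lia. }
      assert (E2 : ((i * n + j) mod n = j)%nat).
      { rewrite Nat.add_comm, Nat.Div0.mod_add. apply Nat.mod_small; auto. }
      assert (Hsel : sel i j = true).
      { unfold sel, selr. destruct (Rle_dec (Dij gx gy L n i j) r) as [|Hno]; auto.
        exfalso; apply Hno. unfold Dij, pt. fold h.
        pose proof (Dd_lip (INR i * h) (INR j * h) s t).
        assert (Rabs (INR i * h - s) <= h) by (apply Rabs_le; lra).
        assert (Rabs (INR j * h - t) <= h) by (apply Rabs_le; lra).
        unfold Dd in *. fold h in Hr. lra. }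
      unfold lo, hi, lo', hi'. rewrite E1, E2, Hsel. lra. }
  eapply Rle_trans; [apply (leb_upper _ _ _ Hm Hcov)|].
  rewrite sm_mul. unfold cntD. fold sel. rewrite <- sm_scal. apply Req_le. apply sm_ext.
  intros i Hi. rewrite <- sm_scal. apply sm_ext. intros j Hj.
  assert (E1 : ((i * n + j) / n = i)%nat).
  { rewrite Nat.div_add_l by lia. rewrite Nat.div_small by lia. lia. }
  assert (E2 : ((i * n + j) mod n = j)%nat).
  { rewrite Nat.add_comm, Nat.Div0.mod_add. apply Nat.mod_small; auto. }
  unfold lo, hi, lo', hi'. rewrite E1, E2. destruct (sel i j); simpl; ring.
Qed.

Lemma measure_lower n r r' m : (1 <= n)%nat ->
  lebesgue2 (close_pairs gx gy L r') m -> r + 4 * (L / INR n) <= r' ->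
  (L / INR n) ^ 2 * cntD gx gy L n r <= m.
Proof.
  intros Hn Hm Hr.
  set (h := L / INR n).
  assert (HnR : 0 < INR n) by (apply lt_0_INR; lia).
  assert (Hh : 0 < h) by (unfold h; apply Rdiv_lt_0_compat; auto).
  assert (Hnh : INR n * h = L) by (unfold h; field; lra).
  apply (leb_lower _ _ _ Hm). intros Sm Hc. unfold cntD.
  apply (key n h (selr gx gy L n r) (close_pairs gx gy L r')); auto.
  intros i j s t Hi Hj Hs Hsi Htj.
  assert (INR i + 1 <= INR n) by (rewrite <- S_INR; apply le_INR; lia).
  assert (INR j + 1 <= INR n) by (rewrite <- S_INR; apply le_INR; lia).
  assert (0 <= INR i) by apply pos_INR. assert (0 <= INR j) by apply pos_INR.
  assert ((INR i + 1) * h <= L) by (rewrite <- Hnh; apply Rmult_le_compat_r; lra).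
  assert ((INR j + 1) * h <= L) by (rewrite <- Hnh; apply Rmult_le_compat_r; lra).
  assert (0 <= INR i * h) by (apply Rmult_le_pos; lra).
  assert (0 <= INR j * h) by (apply Rmult_le_pos; lra).
  unfold close_pairs. split; [lra|]. split; [lra|].
  unfold selr in Hs. destruct (Rle_dec (Dij gx gy L n i j) r) as [Hd|]; [|discriminate].
  pose proof (Dd_lip s t (INR i * h) (INR j * h)).
  assert (Rabs (s - INR i * h) <= h) by (apply Rabs_le; lra).
  assert (Rabs (t - INR j * h) <= h) by (apply Rabs_le; lra).
  unfold Dij, pt, Dd in *. fold h in Hd, Hr. lra.
Qed.

End Curve.

Definition gtr (D r : R) : R := if Rle_dec D r then 0 else 1.

Definition TK (phi : R -> R) (tau : R) (K : nat) (D : R) : R :=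
  sm K (fun k => (phi ((INR k + 1) * tau) - phi (INR k * tau)) * gtr D (INR k * tau)).

Lemma telescope (F : nat -> R) K : sm K (fun k => F (S k) - F k) = F K - F O.
Proof. induction K; simpl sm; [simpl; ring|]. rewrite IHK. ring. Qed.

Section Layer.
Variables (phi : R -> R) (tau Dl : R).
Hypothesis Hphi0 : phi 0 = 0.
Hypothesis Hmono : forall x y, 0 <= x <= y -> phi x <= phi y.
Hypothesis Htau : 0 < tau.

Lemma TK_full K D : INR K * tau - tau < D -> TK phi tau K D = phi (INR K * tau).
Proof.
  intros HD. unfold TK.
  rewrite (sm_ext K _ (fun k => phi (INR (S k) * tau) - phi (INR k * tau))).
  - pose proof (telescope (fun k => phi (INR k * tau)) K) as T. cbv beta in T. rewrite T. simpl INR. rewrite Rmult_0_l, Hphi0. ring.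
  - intros k Hk. unfold gtr. rewrite S_INR.
    assert (INR k + 1 <= INR K) by (rewrite <- S_INR; apply le_INR; lia).
    destruct (Rle_dec D (INR k * tau)); [|ring]. nra.
Qed.

Lemma TK_lower K D : 0 <= D -> D <= INR K * tau -> phi D <= TK phi tau K D.
Proof.
  revert D. induction K; intros D HD0 HD.
  - simpl in HD. assert (D = 0) by lra. subst. rewrite Hphi0. unfold TK; simpl; lra.
  - destruct (Rle_dec D (INR K * tau)).
    + unfold TK; simpl sm. fold (TK phi tau K D). unfold gtr.
      destruct (Rle_dec D (INR K * tau)); [|contradiction]. rewrite Rmult_0_r, Rplus_0_r. auto.
    + rewrite TK_full; [|rewrite S_INR; lra]. apply Hmono. split; auto.
Qed.

Lemma TK_upper K D Dl' : 0 <= D -> 0 <= Dl' ->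
  (forall k, (k < K)%nat -> phi ((INR k + 1) * tau) - phi (INR k * tau) <= Dl') ->
  TK phi tau K D <= phi D + Dl'.
Proof.
  revert D. induction K; intros D HD0 HDl0 HDl.
  - unfold TK; simpl. assert (phi 0 <= phi D) by (apply Hmono; lra). lra.
  - destruct (Rle_dec D (INR K * tau)).
    + unfold TK; simpl sm. fold (TK phi tau K D). unfold gtr.
      destruct (Rle_dec D (INR K * tau)); [|contradiction]. rewrite Rmult_0_r, Rplus_0_r.
      apply IHK; auto.
    + rewrite TK_full; [|rewrite S_INR; lra]. rewrite S_INR.
      assert (phi (INR K * tau) <= phi D) by (apply Hmono; split; [|lra]; apply Rmult_le_pos; [apply pos_INR|lra]).
      specialize (HDl K (Nat.lt_succ_diag_r K)). lra.
Qed.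
End Layer.

Definition Gf gx gy L n r := cntD gx gy L n r / INR n ^ 2.
Definition Ef gx gy L n (phi : R -> R) :=
  sm n (fun i => sm n (fun j => phi (Dij gx gy L n i j))) / INR n ^ 2.
Definition Tf gx gy L n (phi : R -> R) tau K :=
  sm K (fun k => (phi ((INR k + 1) * tau) - phi (INR k * tau)) * (1 - Gf gx gy L n (INR k * tau))).

Lemma sum_gtr gx gy L n r :
  sm n (fun i => sm n (fun j => gtr (Dij gx gy L n i j) r)) = INR n * INR n - cntD gx gy L n r.
Proof.
  unfold cntD.
  replace (INR n * INR n) with (sm n (fun i => sm n (fun j => 1))) by (rewrite !sm_const; ring).
  rewrite <- sm_minus. apply sm_ext; intros i _.
  rewrite <- sm_minus. apply sm_ext; intros j _.
  unfold gtr, selr. destruct (Rle_dec (Dij gx gy L n i j) r); simpl; ring.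
Qed.

Lemma sm3 n K (c : nat -> R) (g : nat -> nat -> nat -> R) :
  sm n (fun i => sm n (fun j => sm K (fun k => c k * g k i j))) =
  sm K (fun k => c k * sm n (fun i => sm n (fun j => g k i j))).
Proof.
  erewrite sm_ext. 2:{ intros i _. rewrite sm_swap. reflexivity. }
  rewrite sm_swap. apply sm_ext. intros k _.
  rewrite <- sm_scal. apply sm_ext. intros i _. rewrite <- sm_scal. reflexivity.
Qed.

Lemma layer_grid gx gy L n phi tau K Dl :
  (1 <= n)%nat -> phi 0 = 0 -> (forall x y, 0 <= x <= y -> phi x <= phi y) -> 0 < tau -> 0 <= Dl ->
  (forall k, (k < K)%nat -> phi ((INR k + 1) * tau) - phi (INR k * tau) <= Dl) ->
  (forall i j, (i < n)%nat -> (j < n)%nat -> Dij gx gy L n i j <= INR K * tau) ->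
  Ef gx gy L n phi <= Tf gx gy L n phi tau K <= Ef gx gy L n phi + Dl.
Proof.
  intros Hn H0 Hm Ht HDl HDk HD.
  assert (HnR : 0 < INR n) by (apply lt_0_INR; lia).
  assert (Hn2 : 0 < INR n ^ 2) by (apply pow_lt; auto).
  assert (ET : Tf gx gy L n phi tau K =
     sm n (fun i => sm n (fun j => TK phi tau K (Dij gx gy L n i j))) / INR n ^ 2).
  { unfold Tf, TK.
    rewrite (sm3 n K (fun k => phi ((INR k + 1) * tau) - phi (INR k * tau))
               (fun k i j => gtr (Dij gx gy L n i j) (INR k * tau))).
    unfold Rdiv. rewrite Rmult_comm, <- sm_scal. apply sm_ext. intros k _.
    rewrite sum_gtr. unfold Gf. field. lra. }
  rewrite ET. unfold Ef. unfold Rdiv. split.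
  - apply Rmult_le_compat_r; [left; apply Rinv_0_lt_compat; auto|].
    apply sm_le; intros i Hi; apply sm_le; intros j Hj.
    apply TK_lower; auto. apply dist2_nonneg.
  - apply Rle_trans with ((sm n (fun i => sm n (fun j => phi (Dij gx gy L n i j))) + INR n ^ 2 * Dl) * / INR n ^ 2).
    + apply Rmult_le_compat_r; [left; apply Rinv_0_lt_compat; auto|].
      replace (INR n ^ 2 * Dl) with (sm n (fun i => sm n (fun j => Dl))) by (rewrite sm_const, sm_const; ring).
      rewrite <- sm_plus. apply sm_le; intros i Hi. rewrite <- sm_plus. apply sm_le; intros j Hj.
      apply TK_upper; auto. apply dist2_nonneg.
    + right. field. lra.
Qed.

Lemma tele_H (H : R -> R) tau K :
  sm K (fun k => H (INR k * tau + tau) - H (INR k * tau - tau)) =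
  H (INR K * tau) + H (INR K * tau - tau) - H 0 - H (- tau).
Proof.
  induction K; simpl sm.
  - simpl. replace (0 * tau) with 0 by ring. replace (0 - tau) with (- tau) by ring. ring.
  - rewrite IHK. rewrite S_INR.
    replace ((INR K + 1) * tau) with (INR K * tau + tau) by ring.
    replace (INR K * tau + tau - tau) with (INR K * tau) by ring. ring.
Qed.

Lemma compare (GX GS H phi : R -> R) EX ES tau K Dl :
  0 < tau -> 0 <= Dl ->
  (forall x y, x <= y -> H x <= H y) -> (forall x, 0 <= H x <= 1) ->
  (forall k, (k < K)%nat -> 0 <= phi ((INR k + 1) * tau) - phi (INR k * tau) <= Dl) ->
  (forall r, H (r - tau) <= GX r <= H (r + tau)) ->
  (forall r, H (r - tau) <= GS r <= H (r + tau)) ->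
  EX <= sm K (fun k => (phi ((INR k + 1) * tau) - phi (INR k * tau)) * (1 - GX (INR k * tau))) <= EX + Dl ->
  ES <= sm K (fun k => (phi ((INR k + 1) * tau) - phi (INR k * tau)) * (1 - GS (INR k * tau))) <= ES + Dl ->
  Rabs (EX - ES) <= 3 * Dl.
Proof.
  intros Ht HDl HHm HH01 Hphi HX HS [TX1 TX2] [TS1 TS2].
  assert (Htel : sm K (fun k => H (INR k * tau + tau) - H (INR k * tau - tau)) <= 2).
  { rewrite tele_H. pose proof (HH01 (INR K * tau)). pose proof (HH01 (INR K * tau - tau)).
    pose proof (HH01 0). pose proof (HH01 (- tau)). lra. }
  assert (Hdiff : forall (G1 G2 : R -> R), (forall r, H (r - tau) <= G1 r <= H (r + tau)) ->
     (forall r, H (r - tau) <= G2 r <= H (r + tau)) ->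
     sm K (fun k => (phi ((INR k + 1) * tau) - phi (INR k * tau)) * (1 - G1 (INR k * tau)))
     - sm K (fun k => (phi ((INR k + 1) * tau) - phi (INR k * tau)) * (1 - G2 (INR k * tau))) <= 2 * Dl).
  { intros G1 G2 H1 H2. rewrite <- sm_minus.
    apply Rle_trans with (sm K (fun k => Dl * (H (INR k * tau + tau) - H (INR k * tau - tau)))).
    - apply sm_le. intros k Hk. specialize (Hphi k Hk).
      pose proof (H1 (INR k * tau)). pose proof (H2 (INR k * tau)).
      assert (H (INR k * tau - tau) <= H (INR k * tau + tau)) by (apply HHm; lra).
      nra.
    - rewrite sm_scal. nra. }
  pose proof (Hdiff GX GS HX HS) as D1. pose proof (Hdiff GS GX HS HX) as D2.
  apply Rabs_le. split; lra.
Qed.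

Lemma Rdiv_le_0_compat a b : 0 <= a -> 0 < b -> 0 <= a / b.
Proof. intros. unfold Rdiv. apply Rmult_le_pos; auto. left; apply Rinv_0_lt_compat; auto. Qed.

Section Curve2.
Variables (gx gy : R -> R) (L : R).
Hypothesis HL : 0 < L.
Hypothesis Lx : forall s t, Rabs (gx s - gx t) <= Rabs (s - t).
Hypothesis Ly : forall s t, Rabs (gy s - gy t) <= Rabs (s - t).

Lemma square_cover r : rect_cover_sum (close_pairs gx gy L r) (L * L).
Proof.
  replace (L * L) with (sm 1 (fun k => ((fun _ => L) k - (fun _ => 0) k) * ((fun _ => L) k - (fun _ => 0) k))) by (simpl; ring).
  apply finite_cover.
  - intros; lra.
  - intros s t [Hs [Ht _]]. exists O. split; [lia|]. lra.
Qed.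

Definition mfun (r : R) : R :=
  proj1_sig (leb_exists (close_pairs gx gy L r) (ex_intro _ (L * L) (square_cover r))).

Lemma mfun_spec r : lebesgue2 (close_pairs gx gy L r) (mfun r).
Proof. unfold mfun. destruct (leb_exists _ _) as [m Hm]. simpl. auto. Qed.

Lemma mfun_bounds r : 0 <= mfun r <= L * L.
Proof. split; [apply (leb_nonneg _ _ (mfun_spec r))|]. apply (leb_upper _ _ _ (mfun_spec r) (square_cover r)). Qed.

Lemma mfun_mono r r' : r <= r' -> mfun r <= mfun r'.
Proof.
  intros H. apply (leb_mono (close_pairs gx gy L r) (close_pairs gx gy L r')); try apply mfun_spec.
  intros s t [H1 [H2 H3]]. split; auto. split; auto. lra.
Qed.

Definition Hfun r := mfun r / L ^ 2.

Lemma Hfun_bounds r : 0 <= Hfun r <= 1.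
Proof. unfold Hfun. pose proof (mfun_bounds r). assert (0 < L ^ 2) by (apply pow_lt; lra).
  split. apply Rdiv_le_0_compat; lra. apply (Rmult_le_reg_r (L^2)); auto. unfold Rdiv.
  rewrite Rmult_assoc, Rinv_l by lra. simpl; lra. Qed.

Lemma Hfun_mono r r' : r <= r' -> Hfun r <= Hfun r'.
Proof. intros H. unfold Hfun, Rdiv. apply Rmult_le_compat_r.
  left; apply Rinv_0_lt_compat, pow_lt; lra. apply mfun_mono; auto. Qed.

Lemma G_bounds n r : (1 <= n)%nat ->
  Hfun (r - 4 * (L / INR n)) <= Gf gx gy L n r <= Hfun (r + 4 * (L / INR n)).
Proof.
  intros Hn. assert (HnR : 0 < INR n) by (apply lt_0_INR; lia).
  assert (E : (L / INR n) ^ 2 * cntD gx gy L n r / L ^ 2 = Gf gx gy L n r).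
  { unfold Gf. field. lra. }
  unfold Hfun. rewrite <- E. assert (0 < L ^ 2) by (apply pow_lt; lra).
  split; unfold Rdiv; apply Rmult_le_compat_r; try (left; apply Rinv_0_lt_compat; auto).
  - apply (measure_upper gx gy L HL Lx Ly n r (r - 4 * (L / INR n))); auto. apply mfun_spec. lra.
  - apply (measure_lower gx gy L HL Lx Ly n r (r + 4 * (L / INR n))); auto. apply mfun_spec. lra.
Qed.

Lemma Dij_bound n i j : (i < n)%nat -> (j < n)%nat -> Dij gx gy L n i j <= 2 * L.
Proof.
  intros Hi Hj. assert (HnR : 0 < INR n) by (apply lt_0_INR; lia).
  unfold Dij, Dd. eapply Rle_trans; [apply (P_lip gx gy Lx Ly)|].
  assert (forall k, (k < n)%nat -> 0 <= pt L n k <= L).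
  { intros k Hk. unfold pt. assert (INR k <= INR n) by (apply le_INR; lia).
    assert (0 <= INR k) by apply pos_INR.
    split. apply Rmult_le_pos; auto. apply Rdiv_le_0_compat; lra.
    replace L with (INR n * (L / INR n)) at 2 by (field; lra).
    apply Rmult_le_compat_r; auto. apply Rdiv_le_0_compat; lra. }
  pose proof (H i Hi). pose proof (H j Hj).
  assert (Rabs (pt L n i - pt L n j) <= L) by (apply Rabs_le; lra). lra.
Qed.
End Curve2.

Lemma nat_between x tau : 0 <= x -> 0 < tau -> exists K : nat, x <= INR K * tau <= x + tau.
Proof.
  intros Hx Ht. destruct (archimed (x / tau)) as [H1 H2].
  assert (Hpos : (0 < up (x / tau))%Z).
  { apply lt_IZR. apply Rle_lt_trans with (x / tau); auto. apply Rdiv_le_0_compat; lra. }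
  exists (Z.to_nat (up (x / tau))). rewrite INR_IZR_INZ, Z2Nat.id by lia.
  set (u := IZR (up (x / tau))) in *.
  assert (E : x / tau * tau = x) by (field; lra).
  split.
  - apply Rlt_le. rewrite <- E at 1. apply Rmult_lt_compat_r; auto.
  - assert (u * tau <= (x / tau + 1) * tau) by (apply Rmult_le_compat_r; lra). nra.
Qed.

Lemma conv_E (gx gy : R -> R) L (gx' gy' : R -> R) L' (phi : R -> R) Lam
  (HL : 0 < L) (HL' : 0 < L') :
  (forall s t, Rabs (gx s - gx t) <= Rabs (s - t)) ->
  (forall s t, Rabs (gy s - gy t) <= Rabs (s - t)) ->
  (forall s t, Rabs (gx' s - gx' t) <= Rabs (s - t)) ->
  (forall s t, Rabs (gy' s - gy' t) <= Rabs (s - t)) ->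
  (forall r, Hfun gx gy L HL r = Hfun gx' gy' L' HL' r) ->
  phi 0 = 0 -> (forall x y, 0 <= x <= y -> phi x <= phi y) -> 0 <= Lam ->
  (forall x y, 0 <= x <= y -> y <= 2 * L + 2 * L' + 1 -> phi y - phi x <= Lam * (y - x)) ->
  forall eps, 0 < eps -> exists N0, forall n, (N0 <= n)%nat -> (1 <= n)%nat ->
    Rabs (Ef gx gy L n phi - Ef gx' gy' L' n phi) <= eps.
Proof.
  intros Lx Ly Lx' Ly' HH Hp0 Hpm HLam HLip eps Heps.
  set (B := 2 * L + 2 * L').
  set (tau := Rmin 1 (eps / (3 * Lam + 1))).
  assert (Htau : 0 < tau) by (unfold tau; apply Rmin_pos; [lra|apply Rdiv_lt_0_compat; lra]).
  assert (Htau1 : tau <= 1) by apply Rmin_l.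
  assert (Htau2 : tau <= eps / (3 * Lam + 1)) by apply Rmin_r.
  assert (HLt : 3 * (Lam * tau) <= eps).
  { assert (E : eps / (3 * Lam + 1) * (3 * Lam + 1) = eps) by (field; lra).
    assert (tau * (3 * Lam + 1) <= eps / (3 * Lam + 1) * (3 * Lam + 1)) by (apply Rmult_le_compat_r; lra).
    nra. }
  destruct (nat_between B tau) as [K [HK1 HK2]]; [unfold B; lra|auto|].
  destruct (nat_above (4 * (L + L') / tau)) as [N0 HN0].
  exists N0. intros n Hn Hn1.
  assert (HnR : 0 < INR n) by (apply lt_0_INR; lia).
  assert (HN0n : INR N0 <= INR n) by (apply le_INR; auto).
  assert (Hh : 4 * (L / INR n) <= tau /\ 4 * (L' / INR n) <= tau).
  { assert (4 * (L + L') / tau * tau = 4 * (L + L')) by (field; lra).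
    assert (4 * (L + L') < INR n * tau) by nra.
    assert (E1 : 4 * (L / INR n) * INR n = 4 * L) by (field; lra).
    assert (E2 : 4 * (L' / INR n) * INR n = 4 * L') by (field; lra).
    split; apply (Rmult_le_reg_r (INR n)); auto; [rewrite E1|rewrite E2]; nra. }
  destruct Hh as [Hh1 Hh2].
  assert (Hphi : forall k, (k < K)%nat -> 0 <= phi ((INR k + 1) * tau) - phi (INR k * tau) <= Lam * tau).
  { intros k Hk. assert (0 <= INR k) by apply pos_INR.
    assert (INR k + 1 <= INR K) by (rewrite <- S_INR; apply le_INR; lia).
    split.
    - assert (phi (INR k * tau) <= phi ((INR k + 1) * tau)) by (apply Hpm; split; nra). lra.
    - replace (Lam * tau) with (Lam * ((INR k + 1) * tau - INR k * tau)) by ring.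
      apply HLip. split; nra. unfold B in HK2. nra. }
  apply Rle_trans with (3 * (Lam * tau)); auto.
  apply (compare (Gf gx gy L n) (Gf gx' gy' L' n) (Hfun gx gy L HL) phi _ _ tau K (Lam * tau)); auto.
  - apply Rmult_le_pos; lra.
  - intros; apply Hfun_mono; auto.
  - intros; apply Hfun_bounds; auto.
  - intros r. pose proof (G_bounds gx gy L HL Lx Ly n r Hn1).
    pose proof (Hfun_mono gx gy L HL (r - tau) (r - 4 * (L / INR n))).
    pose proof (Hfun_mono gx gy L HL (r + 4 * (L / INR n)) (r + tau)). split; [apply Rle_trans with (Hfun gx gy L HL (r - 4 * (L / INR n)))|apply Rle_trans with (Hfun gx gy L HL (r + 4 * (L / INR n)))]; try tauto; try (apply H0; lra); try (apply H1; lra).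
  - intros r. pose proof (G_bounds gx' gy' L' HL' Lx' Ly' n r Hn1).
    rewrite !HH.
    pose proof (Hfun_mono gx' gy' L' HL' (r - tau) (r - 4 * (L' / INR n))).
    pose proof (Hfun_mono gx' gy' L' HL' (r + 4 * (L' / INR n)) (r + tau)). split; [apply Rle_trans with (Hfun gx' gy' L' HL' (r - 4 * (L' / INR n)))|apply Rle_trans with (Hfun gx' gy' L' HL' (r + 4 * (L' / INR n)))]; try tauto; try (apply H0; lra); try (apply H1; lra).
  - apply layer_grid; auto. apply Rmult_le_pos; lra. intros k Hk; apply Hphi; auto.
    intros i j Hi Hj. pose proof (Dij_bound gx gy L HL Lx Ly n i j Hi Hj). unfold B in HK1. lra.
  - apply layer_grid; auto. apply Rmult_le_pos; lra. intros k Hk; apply Hphi; auto.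
    intros i j Hi Hj. pose proof (Dij_bound gx' gy' L' HL' Lx' Ly' n i j Hi Hj). unfold B in HK1. lra.
Qed.

Lemma sm2_add n (F G : nat -> nat -> R) :
  sm n (fun i => sm n (fun j => F i j + G i j)) =
  sm n (fun i => sm n (fun j => F i j)) + sm n (fun i => sm n (fun j => G i j)).
Proof. rewrite <- sm_plus. apply sm_ext. intros. apply sm_plus. Qed.

Lemma sm2_pr n c (f g : nat -> R) :
  sm n (fun i => sm n (fun j => c * (f i * g j))) = c * (sm n f * sm n g).
Proof. rewrite <- sm_prod, <- sm_scal. apply sm_ext; intros. apply sm_scal. Qed.

Section Moments.
Variables (x y : nat -> R) (n : nat).
Hypothesis Hn : (1 <= n)%nat.

Definition mean (f : nat -> R) := sm n f / INR n.
Definition xb := mean x.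
Definition yb := mean y.
Definition uu i := x i - xb.
Definition vv i := y i - yb.
Definition qq i := uu i ^ 2 + vv i ^ 2.
Definition VV := mean qq.
Definition AA := mean (fun i => uu i ^ 2).
Definition BB := mean (fun i => vv i ^ 2).
Definition CC := mean (fun i => uu i * vv i).
Definition WW := mean (fun i => (qq i - VV) ^ 2).

Lemma nR : 0 < INR n. Proof. apply lt_0_INR; lia. Qed.

Lemma sum_uu : sm n uu = 0.
Proof. unfold uu, xb, mean. rewrite sm_minus, sm_const. pose proof nR. field. lra. Qed.
Lemma sum_vv : sm n vv = 0.
Proof. unfold vv, yb, mean. rewrite sm_minus, sm_const. pose proof nR. field. lra. Qed.

Definition dsq i j := (x i - x j) ^ 2 + (y i - y j) ^ 2.

Lemma moment2 : sm n (fun i => sm n (fun j => dsq i j)) / INR n ^ 2 = 2 * VV.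
Proof.
  pose proof nR.
  rewrite (sm_ext n _ (fun i => sm n (fun j =>
     1 * (qq i * 1) + 1 * (1 * qq j) + (-2) * (uu i * uu j) + (-2) * (vv i * vv j)))).
  2:{ intros i _. apply sm_ext. intros j _. unfold dsq, qq, uu, vv. ring. }
  rewrite !sm2_add, !sm2_pr, sum_uu, sum_vv, sm_const. unfold VV, mean. field. lra.
Qed.

Lemma moment4 : sm n (fun i => sm n (fun j => dsq i j ^ 2)) / INR n ^ 2 =
   2 * WW + 6 * VV ^ 2 + 2 * (AA - BB) ^ 2 + 8 * CC ^ 2.
Proof.
  pose proof nR.
  rewrite (sm_ext n _ (fun i => sm n (fun j =>
     1 * (qq i ^ 2 * 1) + 2 * (qq i * qq j) + 1 * (1 * qq j ^ 2)
     + (-4) * ((qq i * uu i) * uu j) + (-4) * (uu i * (qq j * uu j))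
     + (-4) * ((qq i * vv i) * vv j) + (-4) * (vv i * (qq j * vv j))
     + 4 * (uu i ^ 2 * uu j ^ 2) + 8 * ((uu i * vv i) * (uu j * vv j)) + 4 * (vv i ^ 2 * vv j ^ 2)))).
  2:{ intros i _. apply sm_ext. intros j _. unfold dsq, qq, uu, vv. ring. }
  rewrite !sm2_add, !sm2_pr, sum_uu, sum_vv, !sm_const.
  assert (EW : WW = mean (fun i => qq i ^ 2) - VV ^ 2).
  { unfold WW, mean.
    rewrite (sm_ext n _ (fun i => qq i ^ 2 + (-2 * VV) * qq i + VV ^ 2)).
    2:{ intros; ring. }
    rewrite !sm_plus, sm_scal, sm_const. unfold VV, mean. field. lra. }
  assert (EV : VV = AA + BB).
  { unfold VV, AA, BB, mean, qq. rewrite sm_plus. field. lra. }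
  rewrite EW. unfold VV, AA, BB, CC, mean in *. rewrite EV. unfold qq. rewrite !sm_plus.
  field. lra.
Qed.

Lemma moment4_ge : sm n (fun i => sm n (fun j => dsq i j ^ 2)) / INR n ^ 2 >= 2 * WW + 6 * VV ^ 2.
Proof. rewrite moment4. pose proof (pow2_ge_0 (AA - BB)). pose proof (pow2_ge_0 CC). lra. Qed.

End Moments.

Lemma Ef2_eq gx gy L n : Ef gx gy L n (fun r => r ^ 2) =
  sm n (fun i => sm n (fun j => dsq (fun i => gx (pt L n i)) (fun i => gy (pt L n i)) i j)) / INR n ^ 2.
Proof. unfold Ef. f_equal. apply sm_ext; intros; apply sm_ext; intros.
  unfold Dij, Dd, dsq. rewrite <- dist2_sq. ring. Qed.

Lemma Ef4_eq gx gy L n : Ef gx gy L n (fun r => r ^ 4) =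
  sm n (fun i => sm n (fun j => dsq (fun i => gx (pt L n i)) (fun i => gy (pt L n i)) i j ^ 2)) / INR n ^ 2.
Proof. unfold Ef. f_equal. apply sm_ext; intros; apply sm_ext; intros.
  unfold Dij, Dd, dsq. rewrite <- dist2_sq. ring. Qed.

Lemma trig_sum (c : R) (n m : nat) : sin c <> 0 -> INR n * c = INR m * PI ->
  sm n (fun i => cos (2 * INR i * c)) = 0 /\ sm n (fun i => sin (2 * INR i * c)) = 0.
Proof.
  intros Hs Hnc.
  assert (Hend1 : sin ((2 * INR n - 1) * c) = sin (- c)).
  { replace ((2 * INR n - 1) * c) with (- c + 2 * INR m * PI) by (replace (2 * INR m * PI) with (2 * (INR m * PI)) by ring; rewrite <- Hnc; ring).
    apply sin_period. }
  assert (Hend2 : cos ((2 * INR n - 1) * c) = cos (- c)).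
  { replace ((2 * INR n - 1) * c) with (- c + 2 * INR m * PI) by (replace (2 * INR m * PI) with (2 * (INR m * PI)) by ring; rewrite <- Hnc; ring).
    apply cos_period. }
  split.
  - apply (Rmult_eq_reg_l (2 * sin c)); [|lra]. rewrite Rmult_0_r, <- sm_scal.
    pose proof (telescope (fun k => sin ((2 * INR k - 1) * c)) n) as T; cbv beta in T.
    rewrite (sm_ext n _ (fun i => sin ((2 * INR (S i) - 1) * c) - sin ((2 * INR i - 1) * c))).
    + rewrite T. simpl INR. rewrite Hend1. replace ((2 * 0 - 1) * c) with (- c) by ring. ring.
    + intros i _. rewrite S_INR.
      replace ((2 * (INR i + 1) - 1) * c) with (2 * INR i * c + c) by ring.
      replace ((2 * INR i - 1) * c) with (2 * INR i * c - c) by ring.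
      rewrite sin_plus, sin_minus. ring.
  - apply (Rmult_eq_reg_l (2 * sin c)); [|lra]. rewrite Rmult_0_r, <- sm_scal.
    pose proof (telescope (fun k => cos ((2 * INR k - 1) * c)) n) as T; cbv beta in T.
    rewrite (sm_ext n _ (fun i => (-1) * (cos ((2 * INR (S i) - 1) * c) - cos ((2 * INR i - 1) * c)))).
    + rewrite sm_scal, T. simpl INR. rewrite Hend2. replace ((2 * 0 - 1) * c) with (- c) by ring. ring.
    + intros i _. rewrite S_INR.
      replace ((2 * (INR i + 1) - 1) * c) with (2 * INR i * c + c) by ring.
      replace ((2 * INR i - 1) * c) with (2 * INR i * c - c) by ring.
      rewrite cos_plus, cos_minus. ring.
Qed.

Lemma circle_moments n : (3 <= n)%nat ->
  Ef cos sin (2 * PI) n (fun r => r ^ 2) = 2 /\ Ef cos sin (2 * PI) n (fun r => r ^ 4) = 6.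
Proof.
  intros Hn.
  assert (Hn1 : (1 <= n)%nat) by lia.
  assert (HnR : 3 <= INR n) by (replace 3 with (INR 3) by (simpl; ring); apply le_INR; auto).
  set (c := PI / INR n).
  assert (Hc : 0 < c) by (unfold c; apply Rdiv_lt_0_compat; [apply PI_RGT_0|lra]).
  assert (Hc2 : 2 * c < PI).
  { unfold c. pose proof PI_RGT_0. apply (Rmult_lt_reg_r (INR n)); [lra|].
    replace (2 * (PI / INR n) * INR n) with (2 * PI) by (field; lra). nra. }
  assert (Hnc1 : INR n * c = INR 1 * PI) by (unfold c; simpl; field; lra).
  assert (Hnc2 : INR n * (2 * c) = INR 2 * PI) by (unfold c; simpl; field; lra).
  assert (Hs1 : sin c <> 0) by (pose proof (sin_gt_0 c Hc ltac:(lra)); lra).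
  assert (Hs2 : sin (2 * c) <> 0) by (pose proof (sin_gt_0 (2 * c) ltac:(lra) Hc2); lra).
  destruct (trig_sum c n 1 Hs1 Hnc1) as [Sc Ss].
  destruct (trig_sum (2 * c) n 2 Hs2 Hnc2) as [Sc2 Ss2].
  set (x := fun i => cos (pt (2 * PI) n i)).
  set (y := fun i => sin (pt (2 * PI) n i)).
  assert (Ept : forall i, pt (2 * PI) n i = 2 * INR i * c) by (intros; unfold pt, c; field; lra).
  assert (Hxb : xb x n = 0).
  { unfold xb, mean, x. rewrite (sm_ext n _ (fun i => cos (2 * INR i * c))) by (intros; rewrite Ept; auto).
    rewrite Sc. unfold Rdiv; ring. }
  assert (Hyb : yb y n = 0).
  { unfold yb, mean, y. rewrite (sm_ext n _ (fun i => sin (2 * INR i * c))) by (intros; rewrite Ept; auto).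
    rewrite Ss. unfold Rdiv; ring. }
  assert (Hu : forall i, uu x n i = cos (2 * INR i * c)) by (intros; unfold uu; rewrite Hxb, <- Ept; unfold x; ring).
  assert (Hv : forall i, vv y n i = sin (2 * INR i * c)) by (intros; unfold vv; rewrite Hyb, <- Ept; unfold y; ring).
  assert (Hq : forall i, qq x y n i = 1).
  { intros. unfold qq. rewrite Hu, Hv. pose proof (sin2_cos2 (2 * INR i * c)). unfold Rsqr in H. lra. }
  assert (HV : VV x y n = 1).
  { unfold VV, mean. rewrite (sm_ext n _ (fun _ => 1)) by (intros; auto). rewrite sm_const. field. lra. }
  assert (HW : WW x y n = 0).
  { unfold WW, mean. rewrite (sm_ext n _ (fun _ => 0)) by (intros; rewrite Hq, HV; ring). rewrite sm_const. field. lra. }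
  assert (HA : AA x n = 1 / 2).
  { unfold AA, mean.
    rewrite (sm_ext n _ (fun i => / 2 + / 2 * cos (2 * INR i * (2 * c)))).
    - rewrite sm_plus, sm_scal, Sc2, sm_const. field. lra.
    - intros i _. rewrite Hu. replace (2 * INR i * (2 * c)) with (2 * (2 * INR i * c)) by ring.
      rewrite cos_2a_cos. field. }
  assert (HB : BB y n = 1 / 2).
  { unfold BB, mean.
    rewrite (sm_ext n _ (fun i => / 2 - / 2 * cos (2 * INR i * (2 * c)))).
    - rewrite sm_minus, sm_scal, Sc2, sm_const. field. lra.
    - intros i _. rewrite Hv. replace (2 * INR i * (2 * c)) with (2 * (2 * INR i * c)) by ring.
      rewrite cos_2a_cos. pose proof (sin2_cos2 (2 * INR i * c)). unfold Rsqr in H. field_simplify. lra. }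
  assert (HC : CC x y n = 0).
  { unfold CC, mean.
    rewrite (sm_ext n _ (fun i => / 2 * sin (2 * INR i * (2 * c)))).
    - rewrite sm_scal, Ss2. field. lra.
    - intros i _. rewrite Hu, Hv. replace (2 * INR i * (2 * c)) with (2 * (2 * INR i * c)) by ring.
      rewrite sin_2a. field. }
  split.
  - rewrite Ef2_eq. fold x y. rewrite moment2 by auto. rewrite HV. ring.
  - rewrite Ef4_eq. fold x y. rewrite moment4 by auto. rewrite HV, HW, HA, HB, HC. ring.
Qed.

Definition avg (f : R -> R) (L : R) (n : nat) := sm n (fun i => f (pt L n i)) / INR n.

Section Avg.
Variables (f : R -> R) (L : R).
Hypothesis HL : 0 < L.
Hypothesis Lf : forall s t, Rabs (f s - f t) <= Rabs (s - t).

Lemma avg_close n m : (1 <= n)%nat -> (1 <= m)%nat -> Rabs (avg f L n - avg f L (n * m)) <= L / INR n.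
Proof.
  intros Hn Hm.
  assert (HnR : 0 < INR n) by (apply lt_0_INR; lia).
  assert (HmR : 0 < INR m) by (apply lt_0_INR; lia).
  unfold avg. rewrite sm_mul, mult_INR.
  assert (E : sm n (fun i => f (pt L n i)) / INR n =
      sm n (fun i => sm m (fun j => f (pt L n i))) / (INR n * INR m)).
  { rewrite (sm_ext n (fun i => sm m (fun j => f (pt L n i))) (fun i => INR m * f (pt L n i)))
      by (intros; apply sm_const).
    rewrite sm_scal. field. lra. }
  rewrite E. unfold Rdiv. rewrite <- Rmult_minus_distr_r, <- sm_minus.
  erewrite (sm_ext n (fun i => sm m _ - sm m _)). 2:{ intros; rewrite <- sm_minus; reflexivity. }
  rewrite Rabs_mult, (Rabs_pos_eq (/ _)) by (left; apply Rinv_0_lt_compat; nra).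
  apply Rle_trans with (sm n (fun i => sm m (fun j => L / INR n)) * / (INR n * INR m)).
  - apply Rmult_le_compat_r; [left; apply Rinv_0_lt_compat; nra|].
    eapply Rle_trans; [apply sm_abs|]. apply sm_le. intros i Hi.
    eapply Rle_trans; [apply sm_abs|]. apply sm_le. intros j Hj.
    eapply Rle_trans; [apply Lf|].
    unfold pt. rewrite mult_INR, plus_INR, mult_INR.
    assert (INR j + 1 <= INR m) by (rewrite <- S_INR; apply le_INR; lia).
    assert (0 <= INR j) by apply pos_INR.
    rewrite Rabs_minus_sym.
    replace ((INR i * INR m + INR j) * (L / (INR n * INR m)) - INR i * (L / INR n))
      with (INR j * (L / (INR n * INR m))) by (field; lra).
    rewrite Rabs_pos_eq by (apply Rmult_le_pos; auto; apply Rlt_le, Rdiv_lt_0_compat; nra).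
    apply (Rmult_le_reg_r (INR n * INR m)); [nra|].
    replace (INR j * (L / (INR n * INR m)) * (INR n * INR m)) with (INR j * L) by (field; lra).
    replace (L / INR n * (INR n * INR m)) with (INR m * L) by (field; lra). nra.
  - rewrite !sm_const. right. field. lra.
Qed.

Lemma avg_cauchy : Cauchy_crit (fun k => avg f L (S k)).
Proof.
  intros eps Heps.
  destruct (nat_above (2 * L / eps)) as [N HN].
  exists N. intros a b Ha Hb. unfold Rdist.
  pose proof (avg_close (S a) (S b) ltac:(lia) ltac:(lia)) as H1.
  pose proof (avg_close (S b) (S a) ltac:(lia) ltac:(lia)) as H2.
  rewrite Nat.mul_comm in H2.
  assert (HaR : INR N < INR (S a)) by (apply lt_INR; lia).
  assert (HbR : INR N < INR (S b)) by (apply lt_INR; lia).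
  assert (0 <= INR N) by apply pos_INR.
  assert (E : 2 * L / eps * eps = 2 * L) by (field; lra).
  assert (L / INR (S a) < eps / 2).
  { apply (Rmult_lt_reg_r (INR (S a))); [lra|]. unfold Rdiv at 1. rewrite Rmult_assoc, Rinv_l by lra. nra. }
  assert (L / INR (S b) < eps / 2).
  { apply (Rmult_lt_reg_r (INR (S b))); [lra|]. unfold Rdiv at 1. rewrite Rmult_assoc, Rinv_l by lra. nra. }
  replace (avg f L (S a) - avg f L (S b)) with
    ((avg f L (S a) - avg f L (S a * S b)) - (avg f L (S b) - avg f L (S a * S b))) by ring.
  eapply Rle_lt_trans; [apply Rabs_triang|]. rewrite Rabs_Ropp. lra.
Qed.

Lemma avg_bound s n : (1 <= n)%nat -> 0 <= s <= L -> Rabs (f s - avg f L n) <= L.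
Proof.
  intros Hn Hs. assert (HnR : 0 < INR n) by (apply lt_0_INR; lia).
  unfold avg. replace (f s - sm n (fun i => f (pt L n i)) / INR n) with
     (sm n (fun i => f s - f (pt L n i)) / INR n) by (rewrite sm_minus, sm_const; field; lra).
  unfold Rdiv. rewrite Rabs_mult, (Rabs_pos_eq (/ _)) by (left; apply Rinv_0_lt_compat; lra).
  apply Rle_trans with (sm n (fun _ => L) * / INR n).
  - apply Rmult_le_compat_r; [left; apply Rinv_0_lt_compat; lra|].
    eapply Rle_trans; [apply sm_abs|]. apply sm_le. intros i Hi.
    eapply Rle_trans; [apply Lf|]. apply Rabs_le.
    assert (INR i + 1 <= INR n) by (rewrite <- S_INR; apply le_INR; lia).
    assert (0 <= INR i) by apply pos_INR.
    unfold pt. assert (0 <= INR i * (L / INR n) <= L).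
    { split. apply Rmult_le_pos; auto; left; apply Rdiv_lt_0_compat; lra.
      apply (Rmult_le_reg_r (INR n)); auto.
      replace (INR i * (L / INR n) * INR n) with (INR i * L) by (field; lra). nra. }
    lra.
  - rewrite sm_const. right. field. lra.
Qed.
End Avg.

Section Wlow.
Variables (gx gy : R -> R) (L : R).
Hypothesis HL : 0 < L.
Hypothesis Lx : forall s t, Rabs (gx s - gx t) <= Rabs (s - t).
Hypothesis Ly : forall s t, Rabs (gy s - gy t) <= Rabs (s - t).
Variable n : nat.
Hypothesis Hn : (1 <= n)%nat.

Definition xs := fun i => gx (pt L n i).
Definition ys := fun i => gy (pt L n i).
Definition uq s := (gx s - avg gx L n) ^ 2 + (gy s - avg gy L n) ^ 2 - VV xs ys n.

Lemma uq_lip s t : 0 <= s <= L -> 0 <= t <= L -> Rabs (uq s - uq t) <= 4 * L * Rabs (s - t).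
Proof.
  intros Hs Ht. unfold uq.
  pose proof (avg_bound gx L HL Lx s n Hn Hs). pose proof (avg_bound gx L HL Lx t n Hn Ht).
  pose proof (avg_bound gy L HL Ly s n Hn Hs). pose proof (avg_bound gy L HL Ly t n Hn Ht).
  pose proof (Lx s t). pose proof (Ly s t).
  set (a := gx s - avg gx L n) in *. set (b := gx t - avg gx L n) in *.
  set (c := gy s - avg gy L n) in *. set (d := gy t - avg gy L n) in *.
  assert (Ea : gx s - gx t = a - b) by (unfold a, b; ring).
  assert (Ec : gy s - gy t = c - d) by (unfold c, d; ring).
  rewrite Ea in H3. rewrite Ec in H4.
  replace (a ^ 2 + c ^ 2 - VV xs ys n - (b ^ 2 + d ^ 2 - VV xs ys n)) with
    ((a - b) * (a + b) + (c - d) * (c + d)) by ring.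
  eapply Rle_trans; [apply Rabs_triang|]. rewrite !Rabs_mult.
  assert (Rabs (a + b) <= 2 * L) by (eapply Rle_trans; [apply Rabs_triang|]; lra).
  assert (Rabs (c + d) <= 2 * L) by (eapply Rle_trans; [apply Rabs_triang|]; lra).
  pose proof (Rabs_pos (a - b)). pose proof (Rabs_pos (c - d)).
  pose proof (Rabs_pos (a + b)). pose proof (Rabs_pos (c + d)). nra.
Qed.

Lemma qq_uq i : qq xs ys n i - VV xs ys n = uq (pt L n i).
Proof. unfold qq, uq, uu, vv, xb, yb, mean, avg, xs, ys. reflexivity. Qed.

Lemma W_lower_gen s0 a dl al be : 0 <= s0 <= L -> 0 < a -> a <= Rabs (uq s0) ->
  0 < dl -> 4 * L * dl <= a / 2 ->
  0 <= al -> be < L -> be - al = dl -> s0 - dl <= al -> be <= s0 + dl ->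
  (dl / L - 1 / INR n) * (a ^ 2 / 4) <= WW xs ys n.
Proof.
  intros Hs0 Ha Hu Hdl H4L Hal Hbe Hba Hs1 Hs2.
  assert (HnR : 0 < INR n) by (apply lt_0_INR; lia).
  assert (Hterm : forall i, (i < n)%nat ->
      indi (INR n * al / L) (INR n * be / L) (INR i) * (a ^ 2 / 4) <= (qq xs ys n i - VV xs ys n) ^ 2).
  { intros i Hi. rewrite qq_uq.
    destruct (ind_01 (INR n * al / L) (INR n * be / L) (INR i)) as [E|E]; rewrite E.
    { rewrite Rmult_0_l; apply pow2_ge_0. }
    assert (Hi2 : INR n * al / L <= INR i <= INR n * be / L) by (apply ind_pos; lra).
    assert (Hpt : al <= pt L n i <= be).
    { unfold pt. destruct Hi2 as [Hi2 Hi3].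
      assert (E1 : INR i * (L / INR n) * INR n = INR i * L) by (field; lra).
      assert (E2 : INR n * al / L * L = al * INR n) by (field; lra).
      assert (E3 : INR n * be / L * L = be * INR n) by (field; lra).
      apply (Rmult_le_compat_r L) in Hi2; [|lra]. apply (Rmult_le_compat_r L) in Hi3; [|lra].
      rewrite E2 in Hi2. rewrite E3 in Hi3.
      split; apply (Rmult_le_reg_r (INR n)); auto; rewrite E1; lra. }
    pose proof (uq_lip (pt L n i) s0 ltac:(lra) ltac:(lra)) as Hl.
    assert (Rabs (pt L n i - s0) <= dl) by (apply Rabs_le; lra).
    assert (Rabs (uq (pt L n i) - uq s0) <= a / 2).
    { eapply Rle_trans; [apply Hl|]. eapply Rle_trans; [|apply H4L].
      apply Rmult_le_compat_l; lra. }
    assert (a / 2 <= Rabs (uq (pt L n i))).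
    { pose proof (Rabs_triang_inv (uq s0) (uq (pt L n i))) as T.
      rewrite Rabs_minus_sym in H0. lra. }
    rewrite <- (pow2_abs (uq (pt L n i))). pose proof (Rabs_pos (uq (pt L n i))). nra. }
  assert (Hcnt : INR n * be / L - INR n * al / L - 1 < cnt (INR n * al / L) (INR n * be / L) n).
  { apply cnt_lower.
    - apply Rdiv_le_0_compat; [apply Rmult_le_pos; lra|lra].
    - apply (Rmult_lt_reg_r L); auto. replace (INR n * be / L * L) with (INR n * be) by (field; lra). nra. }
  assert (Esum : INR n * WW xs ys n = sm n (fun i => (qq xs ys n i - VV xs ys n) ^ 2))
     by (unfold WW, mean; field; lra).
  assert (Hsum : cnt (INR n * al / L) (INR n * be / L) n * (a ^ 2 / 4) <= INR n * WW xs ys n).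
  { rewrite Esum. unfold cnt. rewrite Rmult_comm, <- sm_scal. apply sm_le; intros i Hi.
    rewrite Rmult_comm. apply Hterm; auto. }
  replace (INR n * be / L - INR n * al / L - 1) with (INR n * dl / L - 1) in Hcnt
     by (rewrite <- Hba; field; lra).
  apply (Rmult_le_reg_l (INR n)); auto.
  replace (INR n * ((dl / L - 1 / INR n) * (a ^ 2 / 4))) with ((INR n * dl / L - 1) * (a ^ 2 / 4))
     by (field; lra).
  assert (0 <= a ^ 2 / 4) by (pose proof (pow2_ge_0 a); lra). nra.
Qed.

Lemma W_lower s0 a : 0 <= s0 < L -> 0 < a -> a <= Rabs (uq s0) ->
  (Rmin (a / (8 * L)) (L / 4) / L - 1 / INR n) * (a ^ 2 / 4) <= WW xs ys n.
Proof.
  intros Hs0 Ha Hu.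
  set (dl := Rmin (a / (8 * L)) (L / 4)).
  assert (Hdl : 0 < dl) by (unfold dl; apply Rmin_pos; apply Rdiv_lt_0_compat; lra).
  assert (Hdl1 : dl <= a / (8 * L)) by apply Rmin_l.
  assert (Hdl2 : dl <= L / 4) by apply Rmin_r.
  assert (H4L : 4 * L * dl <= a / 2).
  { assert (E : a / (8 * L) * (8 * L) = a) by (field; lra). nra. }
  destruct (Rle_lt_dec s0 (L / 2)) as [Hc|Hc].
  - apply (W_lower_gen s0 a dl s0 (s0 + dl)); auto; lra.
  - apply (W_lower_gen s0 a dl (s0 - dl) s0); auto; lra.
Qed.
End Wlow.

Lemma Rabs_le_inv x a : Rabs x <= a -> - a <= x <= a.
Proof. unfold Rabs; destruct (Rcase_abs x); lra. Qed.

Lemma lip_deriv f f' : (forall t, derivable_pt_lim f t (f' t)) -> (forall t, Rabs (f' t) <= 1) ->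
  forall s t, Rabs (f s - f t) <= Rabs (s - t).
Proof.
  intros Hd Hb.
  assert (K : forall s t, s < t -> Rabs (f t - f s) <= Rabs (t - s)).
  { intros s t Hst. destruct (MVT_cor2 f f' s t Hst (fun c _ => Hd c)) as [c [Hc _]].
    rewrite Hc, Rabs_mult. pose proof (Hb c). pose proof (Rabs_pos (t - s)).
    apply Rle_trans with (1 * Rabs (t - s)); [apply Rmult_le_compat_r; auto|lra]. }
  intros s t. destruct (Rtotal_order s t) as [H|[H|H]].
  - rewrite Rabs_minus_sym, (Rabs_minus_sym s). apply K; auto.
  - subst. unfold Rminus. rewrite !Rplus_opp_r, Rabs_R0. lra.
  - apply K; auto.
Qed.

Lemma lip_cos : forall s t, Rabs (cos s - cos t) <= Rabs (s - t).
Proof. apply (lip_deriv cos (fun x => - sin x)). apply derivable_pt_lim_cos.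
  intros t. rewrite Rabs_Ropp. apply Rabs_le. pose proof (SIN_bound t). lra. Qed.

Lemma lip_sin : forall s t, Rabs (sin s - sin t) <= Rabs (s - t).
Proof. apply (lip_deriv sin cos). apply derivable_pt_lim_sin.
  intros t. apply Rabs_le. pose proof (COS_bound t). lra. Qed.

Lemma twoPI_pos : 0 < 2 * PI.
Proof. pose proof PI_RGT_0. lra. Qed.

Lemma empty_zero gx gy L (HL : 0 < L) r : r < 0 -> Hfun gx gy L HL r = 0.
Proof.
  intros Hr. unfold Hfun.
  assert (mfun gx gy L HL r = 0); [|rewrite H; unfold Rdiv; ring].
  pose proof (mfun_spec gx gy L HL r) as Hm.
  pose proof (leb_nonneg _ _ Hm).
  assert (Hc : rect_cover_sum (close_pairs gx gy L r) (sm 0 (fun k => ((fun _ => 0) k - (fun _ => 0) k) * ((fun _ => 0) k - (fun _ => 0) k)))).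
  { apply finite_cover. intros; lra. intros s t [_ [_ Hd]]. pose proof (dist2_nonneg (gx s) (gy s) (gx t) (gy t)). lra. }
  pose proof (leb_upper _ _ _ Hm Hc). simpl in H0. lra.
Qed.

Lemma VW_conv gx gy L (HL : 0 < L)
  (Lx : forall s t, Rabs (gx s - gx t) <= Rabs (s - t))
  (Ly : forall s t, Rabs (gy s - gy t) <= Rabs (s - t))
  (HH : forall r, Hfun gx gy L HL r = Hfun cos sin (2 * PI) twoPI_pos r) :
  forall eps, 0 < eps -> exists N, forall n, (N <= n)%nat ->
    Rabs (VV (xs gx L n) (ys gy L n) n - 1) <= eps /\ WW (xs gx L n) (ys gy L n) n <= eps.
Proof.
  intros eps Heps.
  set (e := Rmin 1 eps / 8).
  assert (He : 0 < e) by (unfold e; apply Rdiv_lt_0_compat; [apply Rmin_pos|]; lra).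
  assert (He1 : e <= eps / 8) by (unfold e; pose proof (Rmin_r 1 eps); lra).
  assert (He2 : e <= 1 / 8) by (unfold e; pose proof (Rmin_l 1 eps); lra).
  set (Y := 2 * L + 2 * (2 * PI) + 1).
  assert (HY : 0 < Y) by (unfold Y; pose proof twoPI_pos; lra).
  destruct (conv_E gx gy L cos sin (2 * PI) (fun r => r ^ 2) (2 * Y) HL twoPI_pos Lx Ly lip_cos lip_sin HH)
    with (eps := e) as [N2 HN2]; auto.
  { simpl; ring. }
  { intros x y Hxy. nra. }
  { lra. }
  { intros x y Hxy HyY. fold Y in HyY. nra. }
  destruct (conv_E gx gy L cos sin (2 * PI) (fun r => r ^ 4) (4 * Y ^ 3) HL twoPI_pos Lx Ly lip_cos lip_sin HH)
    with (eps := e) as [N4 HN4]; auto.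
  { simpl; ring. }
  { intros x y Hxy. assert (x ^ 2 <= y ^ 2) by nra. nra. }
  { pose proof (pow_lt Y 3 HY). lra. }
  { intros x y Hxy HyY. fold Y in HyY.
    replace (y ^ 4 - x ^ 4) with ((y - x) * ((y + x) * (y ^ 2 + x ^ 2))) by ring.
    replace (4 * Y ^ 3 * (y - x)) with ((y - x) * (4 * Y ^ 3)) by ring.
    apply Rmult_le_compat_l; [lra|].
    assert (y + x <= 2 * Y) by lra. assert (y ^ 2 + x ^ 2 <= 2 * Y ^ 2) by nra.
    assert (0 <= y + x) by lra. assert (0 <= y ^ 2 + x ^ 2) by nra.
    replace (4 * Y ^ 3) with ((2 * Y) * (2 * Y ^ 2)) by ring.
    apply Rmult_le_compat; auto. }
  exists (Nat.max 3 (Nat.max N2 N4)). intros n Hn.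
  assert (Hn1 : (1 <= n)%nat) by lia. assert (Hn3 : (3 <= n)%nat) by lia.
  specialize (HN2 n ltac:(lia) Hn1). specialize (HN4 n ltac:(lia) Hn1).
  destruct (circle_moments n Hn3) as [C2 C4]. rewrite C2 in HN2. rewrite C4 in HN4.
  rewrite Ef2_eq in HN2. rewrite Ef4_eq in HN4.
  change (fun i => gx (pt L n i)) with (xs gx L n) in HN2, HN4.
  change (fun i => gy (pt L n i)) with (ys gy L n) in HN2, HN4.
  rewrite moment2 in HN2 by auto.
  pose proof (moment4_ge (xs gx L n) (ys gy L n) n Hn1) as M4.
  apply Rabs_le_inv in HN2. apply Rabs_le_inv in HN4.
  set (V := VV (xs gx L n) (ys gy L n) n) in *.
  set (W := WW (xs gx L n) (ys gy L n) n) in *.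
  assert (HV : Rabs (V - 1) <= e / 2) by (apply Rabs_le; lra).
  split; [lra|].
  assert (V >= 1 - e / 2) by lra.
  assert (V ^ 2 >= 1 - e) by nra.
  lra.
Qed.

Lemma per_reduce (gx gy : R -> R) L : 0 < L -> (forall t, gx (t + L) = gx t /\ gy (t + L) = gy t) ->
  forall t, exists t0, 0 <= t0 < L /\ gx t = gx t0 /\ gy t = gy t0.
Proof.
  intros HL Hper.
  assert (Hk : forall (k : nat) s, gx (s + INR k * L) = gx s /\ gy (s + INR k * L) = gy s).
  { induction k; intros s.
    - simpl. rewrite Rmult_0_l, Rplus_0_r. auto.
    - rewrite S_INR. replace (s + (INR k + 1) * L) with ((s + INR k * L) + L) by ring.
      destruct (Hper (s + INR k * L)) as [A B]. rewrite A, B. apply IHk. }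
  intros t. destruct (archimed (t / L)) as [H1 H2].
  set (z := up (t / L)) in *.
  set (t0 := t - (IZR z - 1) * L).
  assert (Et : t / L * L = t) by (field; lra).
  exists t0. split.
  - unfold t0. split.
    + assert (IZR z - 1 <= t / L) by lra.
      apply Rmult_le_compat_r with (r := L) in H; [|lra]. lra.
    + assert (t / L - 1 < IZR z - 1) by lra.
      apply Rmult_lt_compat_r with (r := L) in H; [|lra]. lra.
  - destruct (Z_le_gt_dec 0 (z - 1)) as [Hz|Hz].
    + assert (E : IZR (z - 1) = INR (Z.to_nat (z - 1))) by (rewrite INR_IZR_INZ, Z2Nat.id; auto).
      rewrite minus_IZR in E. simpl in E.
      destruct (Hk (Z.to_nat (z - 1)) t0) as [A B].
      replace (t0 + INR (Z.to_nat (z - 1)) * L) with t in A, B by (rewrite <- E; unfold t0; ring).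
      auto.
    + assert (E : IZR (- (z - 1)) = INR (Z.to_nat (- (z - 1)))) by (rewrite INR_IZR_INZ, Z2Nat.id; [reflexivity|lia]).
      rewrite opp_IZR, minus_IZR in E. simpl in E.
      destruct (Hk (Z.to_nat (- (z - 1))) t) as [A B].
      replace (t + INR (Z.to_nat (- (z - 1))) * L) with t0 in A, B by (rewrite <- E; unfold t0; ring).
      auto.
Qed.

Lemma sq_le1 x : x ^ 2 <= 1 -> Rabs x <= 1.
Proof. intros H. rewrite <- pow2_abs in H. pose proof (Rabs_pos x).
  destruct (Rle_dec (Rabs x) 1); auto. exfalso.
  assert (1 * 1 < Rabs x * Rabs x) by (apply Rmult_le_0_lt_compat; lra). simpl in H. lra. Qed.

Theorem proposition5p6 (gx gy : R -> R) (L : R) :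
  C2_simple_closed_arclength gx gy L ->
  (forall r h1 h2, 0 <= r ->
     dist_distr gx gy L r h1 -> dist_distr cos sin (2 * PI) r h2 -> h1 = h2) ->
  exists cx cy : R, forall t, dist2 (gx t) (gy t) cx cy = 1.
Proof.
  intros [HL [[gx1 [gx2 [gy1 [gy2 [Dx [Dx1 [Dy [Dy1 [Cx [Cy Hu]]]]]]]]]] [Hper _]]] Hd.
  assert (Lx : forall s t, Rabs (gx s - gx t) <= Rabs (s - t)).
  { apply (lip_deriv gx gx1 Dx). intros t. pose proof (Hu t). pose proof (pow2_ge_0 (gy1 t)).
    apply sq_le1. lra. }
  assert (Ly : forall s t, Rabs (gy s - gy t) <= Rabs (s - t)).
  { apply (lip_deriv gy gy1 Dy). intros t. pose proof (Hu t). pose proof (pow2_ge_0 (gx1 t)).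
    apply sq_le1. lra. }
  assert (HH : forall r, Hfun gx gy L HL r = Hfun cos sin (2 * PI) twoPI_pos r).
  { intros r. destruct (Rlt_dec r 0).
    - rewrite !empty_zero; auto.
    - apply (Hd r); [lra| |].
      + exists (mfun gx gy L HL r). split; [apply mfun_spec|reflexivity].
      + exists (mfun cos sin (2 * PI) twoPI_pos r). split; [apply mfun_spec|reflexivity]. }
  destruct (R_complete _ (avg_cauchy gx L HL Lx)) as [cx Hcx].
  destruct (R_complete _ (avg_cauchy gy L HL Ly)) as [cy Hcy].
  exists cx, cy. intros t.
  destruct (per_reduce gx gy L HL Hper t) as [t0 [Ht0 [Ex Ey]]]. rewrite Ex, Ey.
  assert (HQ : (gx t0 - cx) ^ 2 + (gy t0 - cy) ^ 2 = 1).
  { apply NNPP; intro Hne.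
    set (Q := (gx t0 - cx) ^ 2 + (gy t0 - cy) ^ 2) in *.
    set (d0 := Rabs (Q - 1)).
    assert (Hd0 : 0 < d0).
    { unfold d0. destruct (Rabs_pos (Q - 1)) as [h|h]; auto. exfalso. apply Hne.
      unfold Rabs in h; destruct (Rcase_abs (Q - 1)); lra. }
    set (a := d0 / 2).
    set (dl := Rmin (a / (8 * L)) (L / 4)).
    assert (Hdl : 0 < dl) by (unfold dl, a; apply Rmin_pos; apply Rdiv_lt_0_compat; lra).
    set (ws := dl / (2 * L) * (a ^ 2 / 4)).
    assert (Hws : 0 < ws).
    { unfold ws, a. apply Rmult_lt_0_compat. apply Rdiv_lt_0_compat; lra.
      assert (0 < (d0 / 2) ^ 2) by (apply pow_lt; lra). lra. }
    set (R0 := Rabs (gx t0 - cx) + Rabs (gy t0 - cy) + 1).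
    assert (HR0 : 1 <= R0) by (unfold R0; pose proof (Rabs_pos (gx t0 - cx)); pose proof (Rabs_pos (gy t0 - cy)); lra).
    set (eta := Rmin 1 (d0 / (16 * (2 * R0 + 1)))).
    assert (Heta : 0 < eta) by (unfold eta; apply Rmin_pos; [lra|apply Rdiv_lt_0_compat; lra]).
    assert (Heta1 : eta <= 1) by apply Rmin_l.
    assert (Heta2 : eta * (2 * R0 + 1) <= d0 / 16).
    { assert (eta <= d0 / (16 * (2 * R0 + 1))) by apply Rmin_r.
      assert (E : d0 / (16 * (2 * R0 + 1)) * (2 * R0 + 1) = d0 / 16) by (field; lra).
      assert (eta * (2 * R0 + 1) <= d0 / (16 * (2 * R0 + 1)) * (2 * R0 + 1)) by (apply Rmult_le_compat_r; lra).
      lra. }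
    destruct (VW_conv gx gy L HL Lx Ly HH (Rmin (d0 / 8) (ws / 2))) as [N1 HN1].
    { apply Rmin_pos; lra. }
    destruct (Hcx eta Heta) as [Nx HNx]. destruct (Hcy eta Heta) as [Ny HNy].
    destruct (nat_above (2 * L / dl)) as [N5 HN5].
    set (k := Nat.max N1 (Nat.max Nx (Nat.max Ny N5))).
    set (n := S k).
    assert (Hn1 : (1 <= n)%nat) by (unfold n; lia).
    destruct (HN1 n ltac:(unfold n, k; lia)) as [HV HW].
    assert (HV' : Rabs (VV (xs gx L n) (ys gy L n) n - 1) <= d0 / 8) by (eapply Rle_trans; [apply HV|apply Rmin_l]).
    assert (HW' : WW (xs gx L n) (ys gy L n) n <= ws / 2) by (eapply Rle_trans; [apply HW|apply Rmin_r]).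
    specialize (HNx k ltac:(unfold k; lia)). specialize (HNy k ltac:(unfold k; lia)).
    unfold Rdist in HNx, HNy. fold n in HNx, HNy.
    set (X := avg gx L n) in *. set (Yb := avg gy L n) in *.
    assert (HnR : INR N5 < INR n) by (apply lt_INR; unfold n, k; lia).
    assert (Hninv : 1 / INR n <= dl / (2 * L)).
    { assert (0 < INR n) by (apply lt_0_INR; lia).
      assert (E : 2 * L / dl * dl = 2 * L) by (field; lra).
      assert (2 * L / dl * dl < INR n * dl) by (apply Rmult_lt_compat_r; lra).
      apply (Rmult_le_reg_r (INR n * (2 * L))); [apply Rmult_lt_0_compat; lra|].
      replace (1 / INR n * (INR n * (2 * L))) with (2 * L) by (field; lra).
      replace (dl / (2 * L) * (INR n * (2 * L))) with (INR n * dl) by (field; lra). lra. }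
    set (Qn := (gx t0 - X) ^ 2 + (gy t0 - Yb) ^ 2).
    assert (HQn : Rabs (Qn - Q) <= d0 / 16).
    { unfold Qn, Q.
      replace ((gx t0 - X) ^ 2 + (gy t0 - Yb) ^ 2 - ((gx t0 - cx) ^ 2 + (gy t0 - cy) ^ 2)) with
        (2 * (gx t0 - cx) * (cx - X) + (cx - X) ^ 2 + (2 * (gy t0 - cy) * (cy - Yb) + (cy - Yb) ^ 2)) by ring.
      assert (A1 : Rabs (cx - X) <= eta) by (rewrite Rabs_minus_sym; lra).
      assert (A2 : Rabs (cy - Yb) <= eta) by (rewrite Rabs_minus_sym; lra).
      eapply Rle_trans; [apply Rabs_triang|].
      eapply Rle_trans; [apply Rplus_le_compat; apply Rabs_triang|].
      rewrite !Rabs_mult, <- (pow2_abs (cx - X)), <- (pow2_abs (cy - Yb)), (Rabs_pos_eq 2) by lra.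
      pose proof (Rabs_pos (cx - X)). pose proof (Rabs_pos (cy - Yb)).
      pose proof (Rabs_pos (gx t0 - cx)). pose proof (Rabs_pos (gy t0 - cy)).
      assert (Rabs (cx - X) ^ 2 <= eta).
      { simpl. rewrite Rmult_1_r. apply Rle_trans with (1 * eta); [apply Rmult_le_compat|]; lra. }
      assert (Rabs (cy - Yb) ^ 2 <= eta).
      { simpl. rewrite Rmult_1_r. apply Rle_trans with (1 * eta); [apply Rmult_le_compat|]; lra. }
      assert (2 * Rabs (gx t0 - cx) * Rabs (cx - X) <= 2 * Rabs (gx t0 - cx) * eta)
        by (apply Rmult_le_compat_l; lra).
      assert (2 * Rabs (gy t0 - cy) * Rabs (cy - Yb) <= 2 * Rabs (gy t0 - cy) * eta)
        by (apply Rmult_le_compat_l; lra).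
      assert (E : eta * (2 * R0 + 1) = 2 * Rabs (gx t0 - cx) * eta + 2 * Rabs (gy t0 - cy) * eta + 3 * eta)
        by (unfold R0; ring).
      rewrite (Rabs_pos_eq (Rabs (cx - X) ^ 2)), (Rabs_pos_eq (Rabs (cy - Yb) ^ 2)) by apply pow2_ge_0.
      lra. }
    assert (Huq : uq gx gy L n t0 = Qn - VV (xs gx L n) (ys gy L n) n) by reflexivity.
    assert (Hbig : a <= Rabs (uq gx gy L n t0)).
    { rewrite Huq. unfold a.
      set (V := VV (xs gx L n) (ys gy L n) n) in *.
      assert (T : Rabs (Q - 1) <= Rabs (Qn - V) + Rabs (Qn - Q) + Rabs (V - 1)).
      { replace (Q - 1) with ((Qn - V) + - (Qn - Q) + (V - 1)) by ring.
        eapply Rle_trans; [apply Rabs_triang|].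
        pose proof (Rabs_triang (Qn - V) (- (Qn - Q))) as T2. rewrite Rabs_Ropp in T2. lra. }
      change (Rabs (Q - 1)) with d0 in T. lra. }
    pose proof (W_lower gx gy L HL Lx Ly n Hn1 t0 a Ht0 ltac:(unfold a; lra) Hbig) as HWl.
    fold dl in HWl.
    assert (dl / L - 1 / INR n >= dl / (2 * L)).
    { assert (dl / L = 2 * (dl / (2 * L))) by (field; lra). lra. }
    assert (0 <= a ^ 2 / 4) by (pose proof (pow2_ge_0 a); lra).
    assert (ws <= (dl / L - 1 / INR n) * (a ^ 2 / 4)) by (unfold ws; apply Rmult_le_compat_r; lra).
    lra. }
  unfold dist2. rewrite HQ. apply sqrt_1.
Qed.
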